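(* The correspondence S ↦ H_S S extends to an Elgot monad (on sets) as follows: η(x ∈ S) = η^S(x); for f : X → H_S S, f^{*} = f^{*}_S · τ · H_{ι'·f} id : H_X X → H_{S⊎{⊥}} X → H_S X → H_S S; for f : X → H_{S⊎X}(S⊎X), f^{†} = τ · H_{[inl, (ι'·f)^{♮}]} id · f^{†}_{S⊎X} : X → H_{S⊎X} S → H_{S⊎{⊥}} S → H_S S, where ι' = [inl, id] · ι : H_S S → S⊎{⊥} and (−)^{♮} is the iteration operator of the maybe monad (−)⊎{⊥}. Moreover, the monad thus defined is isomorphic to the hybrid monad H.
   Context: Trajectories over a set S are pairs ⟨I,e⟩ with I = [0,d] (d finite non-negative real) or I = [0,d) (d non-negative real or ∞) and e : I → S. Trj_S is the monoid of trajectories with domain [0,d), d finite, under concatenation ⟨[0,d1),e1⟩⌢⟨[0,d2),e2⟩ = ⟨[0,d1+d2), λt. if t<d1 then e1^t else e2^{t−d1}⟩, unit ε = ⟨∅,!⟩. H_S X = (Trj_S × X) ∪ (all trajectories over S); elements are triples ⟨I,e,x⟩ and pairs ⟨I,e⟩. H_S is a monad with η^S(x) = ⟨ε,x⟩ and f^{*}_S(m,x) = (m⌢n,y) if f(x)=⟨n,y⟩, f^{*}_S(m,x) = m⌢e if f(x)=e is a trajectory, f^{*}_S(e) = e. It is an Elgot monad whose iteration f^{†}_S is the least fixpoint of g ↦ [η^S, g]^{*}_S · f (w.r.t. the prefix order on trajectories). H_S is functorial in S: for g : S → S', H_g id : H_S X → H_{S'} X applies g pointwise to trajectory values and is identity on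 the X-component. ι : H_S X → X ⊎ (S ⊎ {⊥}) is ι(I,e,x) = inr inl e^0 if I ≠ ∅, inl x otherwise; ι(I,e) = inr inl e^0 if I ≠ ∅, inr inr ⊥ otherwise. τ : H_{S⊎Y} X → H_S X is τ(I,e,x) = ⟨I,e',x⟩ if I = I', else ⟨I',e'⟩; τ(I,e) = ⟨I',e'⟩, where ⟨I',e'⟩ is the largest trajectory with e^t = inl e'^t for all t ∈ I'. Maybe-monad iteration: for f : X → (Y⊎X)⊎{⊥} and x0 ∈ X, take the longest sequence x0,x1,... with f(x_i) = inl inr x_{i+1}; f^{♮}(x0) = inr ⊥ if the sequence is infinite or some f(x_i) = inr ⊥, and f^{♮}(x0) = inl y if for the last element x_n, f(x_n) = inl inl y. The hybrid monad H: HX = Σ_{I=[0,d], d finite} X^I ⊎ Σ_{I=[0,d] or [0,d)} X^I (convergent trajectories in the left summand, divergent in the right); for p = inj⟨I,e⟩ write p_dr = I, p_ev = e; η(x) = inl⟨[0,0], λt.x⟩; for f : X → HY, with I' = ⋃{[0,t] ⊆ I | ∀s∈[0,t]. f(e^s) ≠ inr ε}: f^{*}(inl⟨I,e⟩) = inj⟨I+J, λt. if t<d then (f(e^t))_ev^0 else (f(e^d))_ev^{t−d}⟩ if I' = I = [0,d] and f(e^d) = inj⟨J,e'⟩; f^{*}(inl⟨I,e⟩) = inr⟨I', λt.(f(e^t))_ev^0⟩ if I' ≠ I; f^{*}(inr⟨I,e⟩) = inr⟨I', λt.(f(e^t))_ev^0⟩ (inj ∈ {inl, inr}, + is Minkowski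 addition of intervals). *)

(* Defs.v *)
From Stdlib Require Import Reals Lra ClassicalEpsilon.
Open Scope R_scope.
Set Implicit Arguments.

Definition decP (P : Prop) : bool :=
  if excluded_middle_informative P then true else false.

Inductive dur : Type := DClosed (d : R) | DOpen (d : R) | DInf.

Definition dur_ok (D : dur) : Prop :=
  match D with DClosed d | DOpen d => 0 <= d | DInf => True end.

Definition in_dom (D : dur) (t : R) : Prop :=
  match D with
  | DClosed d => 0 <= t <= d
  | DOpen d => 0 <= t < d
  | DInf => 0 <= t
  end.

(* A trajectory <I,e> over S: the map e is encoded as an option-valued
   function on R which is defined (Some) exactly on I.  Hence Leibniz
   equality of trajectories is equality of <I,e>. *)
Record traj (S : Type) : Type := Traj {
  tdur : dur;
  tev : R -> option S;
  tdur_ok : dur_ok tdur;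
  tev_dom : forall t, tev t <> None <-> in_dom tdur t }.
Arguments tdur {S}. Arguments tev {S}.

Lemma traj_empty_ok : dur_ok (DOpen 0).
Proof. simpl; lra. Qed.
Lemma traj_empty_dom (S : Type) :
  forall t, (fun _ : R => @None S) t <> None <-> in_dom (DOpen 0) t.
Proof. intro t; simpl; split; [intro H; now elim H | lra]. Qed.

Definition traj_empty (S : Type) : traj S :=
  Traj (DOpen 0) (fun _ => None) traj_empty_ok (@traj_empty_dom S).

(* Build a trajectory from its option-valued graph; the domain shape is
   recovered classically.  (All uses below feed genuine trajectories, so
   the fallback branch is never taken.) *)
Definition mk_traj (S : Type) (f : R -> option S) : traj S :=
  match excluded_middle_informative
          (exists D, dur_ok D /\ forall t, f t <> None <-> in_dom D t) with
  | left H =>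
      let (D, HD) := constructive_indefinite_description _ H in
      Traj D f (proj1 HD) (proj2 HD)
  | right _ => traj_empty S
  end.

Definition Trj (S : Type) : Type := { e : traj S | exists d, tdur e = DOpen d }.

Definition trj_len (S : Type) (m : Trj S) : R :=
  match tdur (proj1_sig m) with DOpen d | DClosed d => d | DInf => 0 end.

Lemma trj_empty_pf (S : Type) : exists d, tdur (traj_empty S) = DOpen d.
Proof. now exists 0. Qed.
Definition trj_eps (S : Type) : Trj S := exist _ (traj_empty S) (@trj_empty_pf S).

Definition mk_trj (S : Type) (e : traj S) : Trj S :=
  match excluded_middle_informative (exists d, tdur e = DOpen d) with
  | left H => exist _ e H
  | right _ => trj_eps S
  end.

Definition tconcat (S : Type) (m : Trj S) (e : traj S) : traj S :=
  mk_traj (fun t => if Rlt_dec t (trj_len m) then tev (proj1_sig m) t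
                    else tev e (t - trj_len m)).

Definition trj_cat (S : Type) (m n : Trj S) : Trj S :=
  mk_trj (tconcat m (proj1_sig n)).

Definition tprefix (S : Type) (e e' : traj S) : Prop :=
  forall t, tev e t <> None -> tev e' t = tev e t.

Definition H (S X : Type) : Type := ((Trj S * X) + traj S)%type.

Definition etaH (S X : Type) (x : X) : H S X := inl (trj_eps S, x).

Definition bindH (S X Y : Type) (f : X -> H S Y) (p : H S X) : H S Y :=
  match p with
  | inl (m, x) =>
      match f x with
      | inl (n, y) => inl (trj_cat m n, y)
      | inr e => inr (tconcat m e)
      end
  | inr e => inr e
  end.

Definition H_traj (S X : Type) (p : H S X) : traj S :=
  match p with inl (m, _) => proj1_sig m | inr e => e end.

Definition Hle (S X : Type) (p q : H S X) : Prop :=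
  p = q \/ exists e, p = inr e /\ tprefix e (H_traj q).

Definition copair (A B C : Type) (f : A -> C) (g : B -> C) (z : A + B) : C :=
  match z with inl a => f a | inr b => g b end.

Definition iterH_step (S X Y : Type) (f : X -> H S (Y + X)) (g : X -> H S Y)
  : X -> H S Y :=
  fun x => bindH (copair (@etaH S Y) g) (f x).

Definition iterH (S X Y : Type) (f : X -> H S (Y + X)) : X -> H S Y :=
  epsilon (inhabits (fun _ : X => @inr (Trj S * Y) (traj S) (traj_empty S)))
    (fun g => (forall x, g x = iterH_step f g x) /\
              (forall g', (forall x, g' x = iterH_step f g' x) ->
                          forall x, Hle (g x) (g' x))).

Definition tmap (S S' : Type) (g : S -> S') (e : traj S) : traj S' :=
  mk_traj (fun t => option_map g (tev e t)).

Definition mapH (S S' X : Type) (g : S -> S') (p : H S X) : H S' X :=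
  match p with
  | inl (m, x) => inl (mk_trj (tmap g (proj1_sig m)), x)
  | inr e => inr (tmap g e)
  end.

(* ι : H_S X → X ⊎ (S ⊎ {⊥}),   {⊥} := unit *)
Definition iotaH (S X : Type) (p : H S X) : X + (S + unit) :=
  match p with
  | inl (m, x) =>
      match tev (proj1_sig m) 0 with Some s => inr (inl s) | None => inl x end
  | inr e =>
      match tev e 0 with Some s => inr (inl s) | None => inr (inr tt) end
  end.

Definition iota' (S : Type) (p : H S S) : S + unit :=
  copair (@inl S unit) (fun z => z) (iotaH p).

Definition lprefix (S Y : Type) (e : traj (S + Y)) : traj S :=
  mk_traj (fun t =>
    if decP (forall s, 0 <= s <= t -> exists a, tev e s = Some (inl a))
    then match tev e t with Some (inl a) => Some a | _ => None end
    else None).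

Definition tau (S Y X : Type) (p : H (S + Y) X) : H S X :=
  match p with
  | inl (m, x) =>
      if decP (forall t, tev (lprefix (proj1_sig m)) t <> None <->
                         tev (proj1_sig m) t <> None)
      then inl (mk_trj (lprefix (proj1_sig m)), x)
      else inr (lprefix (proj1_sig m))
  | inr e => inr (lprefix e)
  end.

Definition maybe_step (X Y : Type) (f : X -> (Y + X) + unit)
  (z : (Y + X) + unit) : (Y + X) + unit :=
  match z with inl (inr x) => f x | _ => z end.

Definition maybe_iter (X Y : Type) (f : X -> (Y + X) + unit) (x0 : X) : Y + unit :=
  match excluded_middle_informative
          (exists y, exists n, Nat.iter n (maybe_step f) (inl (inr x0)) = inl (inl y)) with
  | left H => inl (proj1_sig (constructive_indefinite_description _ H))
  | right _ => inr tt
  end.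

Definition Tm (S : Type) : Type := H S S.

Definition etaT (S : Type) (x : S) : Tm S := etaH S x.

Definition bindT (X S : Type) (f : X -> Tm S) (p : Tm X) : Tm S :=
  bindH f (tau (mapH (fun x => iota' (f x)) p : H (S + unit) X)).

Definition iterT (X S : Type) (f : X -> Tm (S + X)%type) : X -> Tm S :=
  fun x => tau (mapH (copair (@inl S unit) (maybe_iter (fun x' => iota' (f x'))))
                     (iterH f x) : H (S + unit) S).

Section ElgotDef.
Local Open Scope type_scope.
Definition is_elgot_monad (T : Type -> Type)
  (ret : forall X, X -> T X)
  (bind : forall X Y, (X -> T Y) -> T X -> T Y)
  (iter : forall X Y, (X -> T (Y + X)) -> X -> T Y) : Prop :=
  let fmap := fun X Y (h : X -> Y) (p : T X) => bind X Y (fun x => ret Y (h x)) p in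
  (forall X (p : T X), bind X X (ret X) p = p) /\
  (forall X Y (f : X -> T Y) (x : X), bind X Y f (ret X x) = f x) /\
  (forall X Y Z (f : X -> T Y) (g : Y -> T Z) (p : T X),
      bind Y Z g (bind X Y f p) = bind X Z (fun x => bind Y Z g (f x)) p) /\
  (forall X Y (f : X -> T (Y + X)) (x : X),
      iter X Y f x = bind (Y + X)%type Y (copair (ret Y) (iter X Y f)) (f x)) /\
  (forall X Y Z (f : X -> T (Y + X)) (g : Y -> T Z) (x : X),
      bind Y Z g (iter X Y f x) =
      iter X Z (fun x' => bind (Y + X)%type (Z + X)%type
                   (copair (fun y => fmap Z (Z + X)%type inl (g y))
                           (fun x'' => ret (Z + X)%type (inr x''))) (f x')) x) /\
  (forall X Y (f : X -> T ((Y + X) + X)) (x : X),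
      iter X Y (fun x' => fmap ((Y + X) + X)%type (Y + X)%type
                   (copair (fun z => z) (@inr Y X)) (f x')) x =
      iter X Y (iter X (Y + X)%type f) x) /\
  (forall X Y Z (f : X -> T (Y + X)) (g : Z -> T (Y + Z)) (h : Z -> X),
      (forall z, f (h z) = fmap (Y + Z)%type (Y + X)%type
                   (copair (@inl Y X) (fun z' => inr (h z'))) (g z)) ->
      forall z, iter X Y f (h z) = iter Z Y g z).
End ElgotDef.

Definition ctraj (X : Type) : Type := { e : traj X | exists d, tdur e = DClosed d }.

Definition ctraj_fallback (X : Type) (e : traj X) : option (ctraj X) :=
  match excluded_middle_informative (exists d, tdur e = DClosed d) with
  | left H => Some (exist _ e H)
  | right _ => None
  end.

(* HX = convergent (closed finite) ⊎ divergent (any) trajectories *)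
Definition HH (X : Type) : Type := (ctraj X + traj X)%type.

Definition mk_conv (X : Type) (e : traj X) : HH X :=
  match ctraj_fallback e with Some c => inl c | None => inr e end.

Definition HH_traj (X : Type) (p : HH X) : traj X :=
  match p with inl c => proj1_sig c | inr e => e end.

Definition hret (X : Type) (x : X) : HH X :=
  mk_conv (mk_traj (fun t => if Req_EM_T t 0 then Some x else None)).

Definition hbind (X Y : Type) (f : X -> HH Y) (p : HH X) : HH Y :=
  let e := HH_traj p in
  let I' := fun t => 0 <= t /\ forall s, 0 <= s <= t ->
              exists x, tev e s = Some x /\ f x <> inr (traj_empty Y) in
  let head := fun t => if decP (I' t)
              then match tev e t with Some x => tev (HH_traj (f x)) 0 | None => None end
              else None in
  let div := inr (mk_traj head) in
  match p with
  | inl c =>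
      match tdur (proj1_sig c) with
      | DClosed d =>
          if decP (forall t, I' t <-> in_dom (DClosed d) t) then
            match tev (proj1_sig c) d with
            | Some xd =>
                let g := fun t =>
                  if Rlt_dec t d
                  then match tev e t with Some x => tev (HH_traj (f x)) 0 | None => None end
                  else tev (HH_traj (f xd)) (t - d) in
                match f xd with
                | inl _ => mk_conv (mk_traj g)
                | inr _ => inr (mk_traj g)
                end
            | None => div
            end
          else div
      | _ => div
      end
  | inr _ => div
  end.

(* Main.v *)
Require Import Defs.
From Stdlib Require Import Reals Lra ClassicalEpsilon Classical FunctionalExtensionality ProofIrrelevance Arith.
Open Scope R_scope.
Set Implicit Arguments.

Definition seg {A} (g : R -> option A) : Prop :=
  (forall t, g t <> None -> 0 <= t) /\
  (forall s t, 0 <= s -> s <= t -> g t <> None -> g s <> None).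

Lemma valid_of_seg A (g : R -> option A) : seg g ->
  exists D, dur_ok D /\ forall t, g t <> None <-> in_dom D t.
Proof.
  intros [H0 H1].
  destruct (classic (exists t, g t <> None)) as [[t0 Ht0]|Hn].
  2:{ exists (DOpen 0); simpl; split; [lra|]. intro t; split.
      - intro H; elim Hn; eauto.
      - lra. }
  destruct (classic (exists M, forall t, g t <> None -> t <= M)) as [[M HM]|Hu].
  - assert (Hb : bound (fun t => g t <> None)) by (exists M; intros t Ht; apply HM; auto).
    destruct (completeness (fun t => g t <> None) Hb (ex_intro _ t0 Ht0)) as [d [Hd1 Hd2]].
    assert (t0 <= d) by (apply Hd1; auto).
    assert (0 <= t0) by (apply H0; auto).
    destruct (classic (g d <> None)) as [Hgd|Hgd].
    + exists (DClosed d); simpl; split; [lra|]. intro t; split.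
      * intro Ht; split; [apply H0; auto| apply Hd1; auto].
      * intros [Ht1 Ht2]. apply H1 with d; auto.
    + exists (DOpen d); simpl; split; [lra|]. intro t; split.
      * intro Ht; split; [apply H0; auto|]. assert (t <= d) by (apply Hd1; auto).
        destruct (Req_dec t d); [subst; contradiction|lra].
      * intros [Ht1 Ht2].
        destruct (classic (exists t', t < t' /\ g t' <> None)) as [[t' [Ht' Hgt']]|Hno].
        -- apply H1 with t'; auto; lra.
        -- assert (d <= t); [|lra]. apply Hd2. intros x Hx.
           destruct (Rle_dec x t); auto. elim Hno; exists x; split; auto; lra.
  - exists DInf; simpl; split; auto. intro t; split.
    + intro; apply H0; auto.
    + intro Ht. destruct (classic (exists t', t <= t' /\ g t' <> None)) as [[t' [Ht' Hgt']]|Hno].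
      * apply H1 with t'; auto.
      * elim Hu; exists t; intros x Hx. destruct (Rle_dec x t); auto.
        elim Hno; exists x; split; auto; lra.
Qed.

Lemma seg_tev A (e : traj A) : seg (tev e).
Proof.
  destruct e as [D f Dok Hd]; simpl. split.
  - intros t Ht. apply Hd in Ht. destruct D; simpl in *; lra.
  - intros s t Hs Hst Ht. apply Hd in Ht. apply Hd. destruct D; simpl in *; lra.
Qed.

Lemma mk_traj_ev A (g : R -> option A) : seg g -> tev (mk_traj g) = g.
Proof.
  intro Hs. unfold mk_traj.
  destruct (excluded_middle_informative _) as [H|H].
  - destruct (constructive_indefinite_description _ H) as [D HD]. reflexivity.
  - elim H. apply valid_of_seg; auto.
Qed.

Lemma dur_unique D1 D2 : dur_ok D1 -> dur_ok D2 ->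
  (forall t, in_dom D1 t <-> in_dom D2 t) -> D1 = D2.
Proof.
  intros H1 H2 H.
  destruct D1 as [a|a|], D2 as [b|b|]; simpl in *.
  - f_equal. assert (a <= b) by (apply (H a); lra). assert (b <= a) by (apply (H b); lra). lra.
  - exfalso. assert (a < b) by (apply (H a); lra).
    assert ((a+b)/2 <= a) by (apply (H ((a+b)/2)); lra). lra.
  - exfalso. assert (a+1 <= a) by (apply (H (a+1)); lra). lra.
  - exfalso. assert (b < a) by (apply (H b); lra).
    assert ((a+b)/2 <= b) by (apply (H ((a+b)/2)); lra). lra.
  - f_equal. destruct (Rtotal_order a b) as [Hl|[He|Hl]]; auto; exfalso.
    + assert ((a+b)/2 < a) by (apply (H ((a+b)/2)); lra). lra.
    + assert ((a+b)/2 < b) by (apply (H ((a+b)/2)); lra). lra.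
  - exfalso. assert (a < a) by (apply (H a); lra). lra.
  - exfalso. assert (b+1 <= b) by (apply (H (b+1)); lra). lra.
  - exfalso. assert (b < b) by (apply (H b); lra). lra.
  - reflexivity.
Qed.

Lemma traj_ext A (e1 e2 : traj A) : tev e1 = tev e2 -> e1 = e2.
Proof.
  destruct e1 as [D1 f1 o1 h1], e2 as [D2 f2 o2 h2]; simpl. intro Hf; subst f2.
  assert (D1 = D2).
  { apply dur_unique; auto. intro t. rewrite <- h1, <- h2. tauto. }
  subst D2. f_equal; apply proof_irrelevance.
Qed.

Lemma traj_ext' A (e1 e2 : traj A) : (forall t, tev e1 t = tev e2 t) -> e1 = e2.
Proof. intro; apply traj_ext; apply functional_extensionality; auto. Qed.

Lemma trj_ext A (m1 m2 : Trj A) : tev (proj1_sig m1) = tev (proj1_sig m2) -> m1 = m2.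
Proof.
  destruct m1 as [e1 p1], m2 as [e2 p2]; simpl. intro H.
  apply traj_ext in H. subst e2. f_equal; apply proof_irrelevance.
Qed.

Lemma trj_dom A (m : Trj A) : 0 <= trj_len m /\
  forall t, tev (proj1_sig m) t <> None <-> 0 <= t < trj_len m.
Proof.
  destruct m as [[D f o h] [d Hd]]; unfold trj_len; simpl in *. subst D. simpl in *.
  split; auto.
Qed.

Definition oseg {A} (g : R -> option A) (d : R) : Prop :=
  0 <= d /\ forall t, g t <> None <-> 0 <= t < d.

Lemma oseg_seg A (g : R -> option A) d : oseg g d -> seg g.
Proof. intros [Hd H]. split; intros; [apply H in H0; lra| apply H; apply H in H2; lra]. Qed.

Lemma mk_trj_ev A (e : traj A) d : oseg (tev e) d ->
  tev (proj1_sig (mk_trj e)) = tev e /\ trj_len (mk_trj e) = d.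
Proof.
  intros [Hd H]. unfold mk_trj.
  destruct (excluded_middle_informative _) as [Hx|Hx].
  - simpl. split; auto. destruct Hx as [d' Hd'].
    unfold trj_len; simpl. rewrite Hd'.
    destruct e as [D f o h]; simpl in *. subst D.
    destruct (Rtotal_order d d') as [Hl|[He|Hl]]; auto; exfalso.
    + simpl in o. assert (0 <= d < d') by lra. apply h in H0. apply H in H0. lra.
    + simpl in o. assert (0 <= d' < d) by lra. apply H in H0. apply h in H0. simpl in H0; lra.
  - elim Hx. exists d. destruct e as [D f o h]; simpl in *.
    apply dur_unique; [exact o| simpl; lra|]. intro t. rewrite <- h. simpl. rewrite H. tauto.
Qed.

Definition trj_of A (g : R -> option A) : Trj A := mk_trj (mk_traj g).

Lemma trj_of_ev A (g : R -> option A) d : oseg g d ->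
  tev (proj1_sig (trj_of g)) = g /\ trj_len (trj_of g) = d.
Proof.
  intro H. unfold trj_of. assert (tev (mk_traj g) = g) by (apply mk_traj_ev; eapply oseg_seg; eauto).
  rewrite <- H0 in H. destruct (mk_trj_ev _ H). rewrite H1, H0. auto.
Qed.

Lemma trj_oseg A (m : Trj A) : oseg (tev (proj1_sig m)) (trj_len m).
Proof. destruct (trj_dom m); split; auto. Qed.
Open Scope R_scope.
Set Implicit Arguments.

Lemma decP_true (P : Prop) : P -> decP P = true.
Proof. unfold decP; destruct (excluded_middle_informative P); tauto. Qed.
Lemma decP_false (P : Prop) : ~ P -> decP P = false.
Proof. unfold decP; destruct (excluded_middle_informative P); tauto. Qed.

Section HS.
Context {S X : Type}.
Definition hg (p : H S X) : R -> option S := tev (H_traj p).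
Definition hend (p : H S X) : option (R * X) :=
  match p with inl (m, x) => Some (trj_len m, x) | inr _ => None end.

Definition WF (g : R -> option S) (en : option (R * X)) : Prop :=
  match en with Some (d, _) => oseg g d | None => seg g end.

Lemma hg_WF p : WF (hg p) (hend p).
Proof. destruct p as [[m x]|e]; simpl; [apply trj_oseg| apply seg_tev]. Qed.

Lemma hg_seg p : seg (hg p).
Proof. pose proof (hg_WF p). destruct p as [[m x]|e]; simpl in *; [eapply oseg_seg; eauto| auto]. Qed.

Lemma H_ext p q : hg p = hg q -> hend p = hend q -> p = q.
Proof.
  destruct p as [[m x]|e], q as [[n y]|e']; simpl; intros H1 H2; try discriminate.
  - injection H2; intros; subst. f_equal. f_equal. apply trj_ext; auto.
  - f_equal. apply traj_ext; auto.
Qed.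

Definition mkH (g : R -> option S) (en : option (R * X)) : H S X :=
  match en with Some (d, x) => inl (trj_of g, x) | None => inr (mk_traj g) end.

Lemma mkH_spec g en : WF g en -> hg (mkH g en) = g /\ hend (mkH g en) = en.
Proof.
  destruct en as [[d x]|]; simpl; intro Hw.
  - destruct (trj_of_ev Hw). unfold hg; simpl. rewrite H, H0. auto.
  - unfold hg; simpl. rewrite mk_traj_ev; auto.
Qed.

Lemma H_eq_mk p g en : WF g en -> hg p = g -> hend p = en -> p = mkH g en.
Proof. intros Hw H1 H2. destruct (mkH_spec g en Hw). apply H_ext; congruence. Qed.

End HS.

Definition gconcat {A} (d : R) (g1 g2 : R -> option A) : R -> option A :=
  fun t => if Rlt_dec t d then g1 t else g2 (t - d).

Lemma gconcat_seg A (g1 g2 : R -> option A) d : oseg g1 d -> seg g2 -> seg (gconcat d g1 g2).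
Proof.
  intros [Hd H1] [H2 H3]. unfold gconcat. split.
  - intros t. destruct (Rlt_dec t d); intro H. apply H1 in H; lra. apply H2 in H; lra.
  - intros s t Hs Hst. destruct (Rlt_dec t d), (Rlt_dec s d); intro H.
    + apply H1. apply H1 in H. lra.
    + lra.
    + apply H1. lra.
    + apply H3 with (t - d); auto; lra.
Qed.

Lemma gconcat_oseg A (g1 g2 : R -> option A) d d2 : oseg g1 d -> oseg g2 d2 ->
  oseg (gconcat d g1 g2) (d + d2).
Proof.
  intros [Hd H1] [Hd2 H2]. unfold gconcat. split; [lra|]. intro t.
  destruct (Rlt_dec t d). rewrite H1; lra. rewrite H2; lra.
Qed.

Lemma tconcat_ev S (m : Trj S) (e : traj S) :
  tev (tconcat m e) = gconcat (trj_len m) (tev (proj1_sig m)) (tev e).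
Proof. unfold tconcat. apply mk_traj_ev. apply gconcat_seg; [apply trj_oseg|apply seg_tev]. Qed.

Lemma trj_cat_ev S (m n : Trj S) :
  tev (proj1_sig (trj_cat m n)) = gconcat (trj_len m) (tev (proj1_sig m)) (tev (proj1_sig n)) /\
  trj_len (trj_cat m n) = trj_len m + trj_len n.
Proof.
  unfold trj_cat. rewrite <- tconcat_ev. apply mk_trj_ev. rewrite tconcat_ev.
  apply gconcat_oseg; apply trj_oseg.
Qed.

Definition shift_end {X} (d : R) (en : option (R * X)) : option (R * X) :=
  match en with Some (d', x) => Some (d + d', x) | None => None end.

Lemma bindH_hg S X Y (k : X -> H S Y) (p : H S X) :
  hg (bindH k p) = match hend p with Some (d, x) => gconcat d (hg p) (hg (k x)) | None => hg p end.
Proof.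
  destruct p as [[m x]|e]; simpl; auto.
  unfold hg; simpl. destruct (k x) as [[n y]|e'] eqn:E; simpl.
  - apply trj_cat_ev.
  - apply tconcat_ev.
Qed.

Lemma bindH_hend S X Y (k : X -> H S Y) (p : H S X) :
  hend (bindH k p) = match hend p with Some (d, x) => shift_end d (hend (k x)) | None => None end.
Proof.
  destruct p as [[m x]|e]; simpl; auto.
  destruct (k x) as [[n y]|e'] eqn:E; simpl; auto.
  destruct (trj_cat_ev m n). rewrite H0. auto.
Qed.

Lemma etaH_hg S X (x : X) : hg (etaH S x) = fun _ => None.
Proof. reflexivity. Qed.
Lemma trj_eps_len S : trj_len (trj_eps S) = 0.
Proof. reflexivity. Qed.
Lemma etaH_hend S X (x : X) : hend (etaH S x) = Some (0, x).
Proof. reflexivity. Qed.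

Lemma tmap_ev S S' (g : S -> S') (e : traj S) : tev (tmap g e) = fun t => option_map g (tev e t).
Proof.
  unfold tmap. apply mk_traj_ev. destruct (seg_tev e) as [H1 H2]. split.
  - intros t H. apply H1. destruct (tev e t); simpl in *; congruence.
  - intros s t Hs Hst H. specialize (H2 s t Hs Hst).
    destruct (tev e t), (tev e s); simpl in *; try congruence. elim H2; congruence.
Qed.

Lemma mapH_hg S S' X (g : S -> S') (p : H S X) : hg (mapH g p) = fun t => option_map g (hg p t).
Proof.
  destruct p as [[m x]|e]; unfold hg; simpl.
  - assert (Ho : oseg (tev (tmap g (proj1_sig m))) (trj_len m)).
    { rewrite tmap_ev. destruct (trj_oseg m) as [Hd H]. split; auto. intro t. rewrite <- H.
      destruct (tev (proj1_sig m) t); simpl; split; congruence. }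
    rewrite (proj1 (mk_trj_ev _ Ho)). apply tmap_ev.
  - apply tmap_ev.
Qed.

Lemma mapH_hend S S' X (g : S -> S') (p : H S X) : hend (mapH g p) = hend p.
Proof.
  destruct p as [[m x]|e]; simpl; auto. f_equal. f_equal.
  assert (Ho : oseg (tev (tmap g (proj1_sig m))) (trj_len m)).
  { rewrite tmap_ev. destruct (trj_oseg m) as [Hd H]. split; auto. intro t. rewrite <- H.
    destruct (tev (proj1_sig m) t); simpl; split; congruence. }
  apply (proj2 (mk_trj_ev _ Ho)).
Qed.

Definition lp {A B} (g : R -> option (A + B)) : R -> option A :=
  fun t => if decP (forall s, 0 <= s <= t -> exists a, g s = Some (inl a))
           then match g t with Some (inl a) => Some a | _ => None end else None.

Lemma lp_seg A B (g : R -> option (A + B)) : seg g -> seg (lp g).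
Proof.
  intros [H1 H2]. unfold lp. split.
  - intros t. destruct (decP _) eqn:E; [|congruence].
    intro H. apply H1. destruct (g t) as [[a|b]|]; congruence.
  - intros s t Hs Hst. destruct (decP (forall s0, 0 <= s0 <= t -> _)) eqn:E; [|congruence].
    intro H. unfold decP in E. destruct (excluded_middle_informative _) as [Hx|Hx]; [|discriminate].
    rewrite decP_true. destruct (Hx s) as [a Ha]; [lra|]. rewrite Ha. congruence.
    intros u Hu. apply Hx. lra.
Qed.

Lemma lprefix_ev S Y (e : traj (S + Y)) : tev (lprefix e) = lp (tev e).
Proof. unfold lprefix. apply mk_traj_ev. apply lp_seg. apply seg_tev. Qed.

Lemma lp_full_oseg A B (g : R -> option (A + B)) d : oseg g d ->
  (forall t, lp g t <> None <-> g t <> None) -> oseg (lp g) d.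
Proof. intros [Hd H] Hf. split; auto. intro t. rewrite Hf. auto. Qed.

Lemma tau_hg S Y X (p : H (S + Y) X) : hg (tau p) = lp (hg p).
Proof.
  destruct p as [[m x]|e]; unfold hg; simpl.
  - destruct (decP _) eqn:E; simpl.
    + unfold decP in E. destruct (excluded_middle_informative _) as [Hx|Hx]; [|discriminate].
      assert (Ho : oseg (tev (lprefix (proj1_sig m))) (trj_len m)).
      { rewrite lprefix_ev. apply lp_full_oseg. apply trj_oseg. rewrite <- lprefix_ev. auto. }
      rewrite (proj1 (mk_trj_ev _ Ho)). apply lprefix_ev.
    + apply lprefix_ev.
  - apply lprefix_ev.
Qed.

Lemma tau_hend S Y X (p : H (S + Y) X) : hend (tau p) =
  match hend p with
  | Some (d, x) => if decP (forall t, lp (hg p) t <> None <-> hg p t <> None) then Some (d, x) else None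
  | None => None end.
Proof.
  destruct p as [[m x]|e]; simpl; auto.
  unfold hg; simpl. rewrite <- lprefix_ev.
  destruct (decP _) eqn:E; simpl; auto.
  unfold decP in E. destruct (excluded_middle_informative _) as [Hx|Hx]; [|discriminate].
  assert (Ho : oseg (tev (lprefix (proj1_sig m))) (trj_len m)).
  { rewrite lprefix_ev. apply lp_full_oseg. apply trj_oseg. rewrite <- lprefix_ev. auto. }
  f_equal. f_equal. apply (proj2 (mk_trj_ev _ Ho)).
Qed.
Open Scope R_scope.
Set Implicit Arguments.

Lemma seg_neg A (g : R -> option A) t : seg g -> t < 0 -> g t = None.
Proof. intros [H1 _] Ht. destruct (g t) eqn:E; auto. exfalso. assert (0 <= t) by (apply H1; congruence). lra. Qed.

Lemma oseg_out A (g : R -> option A) d t : oseg g d -> ~ (0 <= t < d) -> g t = None.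
Proof. intros [_ H] Ht. destruct (g t) eqn:E; auto. exfalso. apply Ht, H. congruence. Qed.

Lemma oseg_in A (g : R -> option A) d t : oseg g d -> 0 <= t < d -> g t <> None.
Proof. intros [_ H] Ht. apply H; auto. Qed.

Lemma gconcat0 A (g : R -> option A) : seg g -> gconcat 0 (fun _ => None) g = g.
Proof.
  intro Hs. apply functional_extensionality; intro t. unfold gconcat.
  destruct (Rlt_dec t 0). symmetry; apply seg_neg; auto. f_equal; ring.
Qed.

Lemma gconcat_none A (g : R -> option A) d : oseg g d -> gconcat d g (fun _ => None) = g.
Proof.
  intro Hs. apply functional_extensionality; intro t. unfold gconcat.
  destruct (Rlt_dec t d); auto. symmetry; apply (oseg_out Hs). lra.
Qed.

Lemma gconcat_assoc A (g1 g2 g3 : R -> option A) d1 d2 : 0 <= d2 ->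
  gconcat (d1 + d2) (gconcat d1 g1 g2) g3 = gconcat d1 g1 (gconcat d2 g2 g3).
Proof.
  intro Hd2. apply functional_extensionality; intro t. unfold gconcat.
  destruct (Rlt_dec t (d1 + d2)), (Rlt_dec t d1), (Rlt_dec (t - d1) d2); try lra; auto.
  replace (t - (d1 + d2)) with (t - d1 - d2) by ring; reflexivity.
Qed.

Section Hlaws.
Context {S : Type}.

Lemma bindH_eta_l X Y (k : X -> H S Y) x : bindH k (etaH S x) = k x.
Proof.
  apply H_ext.
  - rewrite bindH_hg. simpl. apply gconcat0. apply hg_seg.
  - rewrite bindH_hend. simpl. destruct (hend (k x)) as [[d y]|]; simpl; auto. rewrite trj_eps_len. f_equal; f_equal; ring.
Qed.

Lemma bindH_eta_r X (p : H S X) : bindH (@etaH S X) p = p.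
Proof.
  apply H_ext.
  - rewrite bindH_hg. destruct (hend p) as [[d x]|] eqn:E; auto.
    simpl. apply gconcat_none. pose proof (hg_WF p). rewrite E in H. exact H.
  - rewrite bindH_hend. destruct (hend p) as [[d x]|] eqn:E; auto. simpl. rewrite trj_eps_len. f_equal; f_equal; ring.
Qed.

Lemma bindH_assoc X Y Z (k1 : X -> H S Y) (k2 : Y -> H S Z) (p : H S X) :
  bindH k2 (bindH k1 p) = bindH (fun x => bindH k2 (k1 x)) p.
Proof.
  apply H_ext.
  - rewrite !bindH_hg, !bindH_hend. destruct (hend p) as [[d x]|] eqn:E; auto.
    rewrite bindH_hg. destruct (hend (k1 x)) as [[d1 y]|] eqn:E1; simpl; auto.
    apply gconcat_assoc. pose proof (hg_WF (k1 x)) as W. rewrite E1 in W. exact (proj1 W).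
  - rewrite !bindH_hend. destruct (hend p) as [[d x]|] eqn:E; auto.
    rewrite bindH_hend. destruct (hend (k1 x)) as [[d1 y]|] eqn:E1; simpl; auto.
    destruct (hend (k2 y)) as [[d2 z]|]; simpl; auto. f_equal; f_equal; ring.
Qed.
End Hlaws.

Definition prefix {A} (g1 g2 : R -> option A) : Prop := forall t, g1 t <> None -> g2 t = g1 t.

Section Order.
Context {S X : Type}.

Lemma Hle_iff (p q : H S X) : Hle p q <-> p = q \/ (hend p = None /\ prefix (hg p) (hg q)).
Proof.
  unfold Hle. split.
  - intros [H|[e [He Hp]]]; auto. right. subst p. split; auto.
  - intros [H|[H1 H2]]; auto. right. destruct p as [[m x]|e]; simpl in H1; try discriminate.
    exists e; split; auto.
Qed.

Lemma Hle_refl (p : H S X) : Hle p p.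
Proof. left; auto. Qed.

Lemma prefix_trans A (g1 g2 g3 : R -> option A) : prefix g1 g2 -> prefix g2 g3 -> prefix g1 g3.
Proof. intros H1 H2 t Ht. rewrite H2; auto. rewrite H1; auto. Qed.

Lemma prefix_antisym A (g1 g2 : R -> option A) : prefix g1 g2 -> prefix g2 g1 -> g1 = g2.
Proof.
  intros H1 H2. apply functional_extensionality; intro t.
  destruct (g1 t) eqn:E1. rewrite H1; congruence.
  destruct (g2 t) eqn:E2; auto. rewrite <- E1, H2; congruence.
Qed.

Lemma Hle_trans (p q r : H S X) : Hle p q -> Hle q r -> Hle p r.
Proof.
  rewrite !Hle_iff. intros [H1|[H1 H2]] [H3|[H3 H4]]; subst; auto.
  right; split; auto. eapply prefix_trans; eauto.
Qed.

Lemma Hle_antisym (p q : H S X) : Hle p q -> Hle q p -> p = q.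
Proof.
  rewrite !Hle_iff. intros [H1|[H1 H2]] [H3|[H3 H4]]; subst; auto.
  apply H_ext. apply prefix_antisym; auto. congruence.
Qed.

Definition botH : H S X := inr (traj_empty S).
Lemma botH_hg : hg botH = fun _ => None.  Proof. reflexivity. Qed.
Lemma botH_hend : hend botH = None. Proof. reflexivity. Qed.
Lemma botH_le p : Hle botH p.
Proof. rewrite Hle_iff. right. split; auto. intros t H. elim H; reflexivity. Qed.

Definition chain (c : nat -> H S X) : Prop := forall n, Hle (c n) (c (Datatypes.S n)).

Lemma chain_le c : chain c -> forall n m, (n <= m)%nat -> Hle (c n) (c m).
Proof.
  intros Hc n m Hnm. induction Hnm. apply Hle_refl. eapply Hle_trans; eauto.
Qed.

Definition supg (c : nat -> H S X) (t : R) : option S :=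
  match excluded_middle_informative (exists n, hg (c n) t <> None) with
  | left Hx => hg (c (proj1_sig (constructive_indefinite_description _ Hx))) t
  | right _ => None end.

Definition supH (c : nat -> H S X) : H S X :=
  match excluded_middle_informative (exists n, hend (c n) <> None) with
  | left Hx => c (proj1_sig (constructive_indefinite_description _ Hx))
  | right _ => inr (mk_traj (supg c)) end.

Lemma chain_prefix c : chain c -> forall n m, (n <= m)%nat -> prefix (hg (c n)) (hg (c m)).
Proof.
  intros Hc n m Hnm. pose proof (chain_le Hc Hnm) as H. rewrite Hle_iff in H.
  destruct H as [H|[_ H]]; auto. rewrite H. intros t Ht; auto.
Qed.

Lemma chain_end c : chain c -> forall n m, (n <= m)%nat -> hend (c n) <> None -> c m = c n.
Proof.
  intros Hc n m Hnm Hn. pose proof (chain_le Hc Hnm) as H. rewrite Hle_iff in H.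
  destruct H as [H|[H _]]; auto. contradiction.
Qed.

Lemma chain_agree c : chain c -> forall n m t, hg (c n) t <> None -> hg (c m) t <> None ->
  hg (c n) t = hg (c m) t.
Proof.
  intros Hc n m t Hn Hm. destruct (Nat.le_ge_cases n m).
  symmetry; apply (chain_prefix Hc H); auto. apply (chain_prefix Hc H); auto.
Qed.

Lemma supg_spec c : chain c -> forall t v, supg c t = Some v <-> exists n, hg (c n) t = Some v.
Proof.
  intros Hc t v. unfold supg. destruct (excluded_middle_informative _) as [Hx|Hx].
  - destruct (constructive_indefinite_description _ Hx) as [n Hn]; simpl. split; eauto.
    intros [m Hm]. rewrite <- Hm. apply chain_agree; auto; congruence.
  - split; [discriminate|]. intros [n Hn]. elim Hx. exists n; congruence.
Qed.

Lemma supg_seg c : chain c -> seg (supg c).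
Proof.
  intro Hc. split.
  - intros t Ht. destruct (supg c t) eqn:E; [|congruence].
    apply supg_spec in E; auto. destruct E as [n Hn]. apply (proj1 (hg_seg (c n))). congruence.
  - intros s t Hs Hst Ht. destruct (supg c t) eqn:E; [|congruence].
    apply supg_spec in E; auto. destruct E as [n Hn].
    destruct (hg (c n) s) eqn:E2.
    + assert (supg c s = Some s1) by (apply supg_spec; eauto). congruence.
    + exfalso. apply (proj2 (hg_seg (c n)) s t Hs Hst); congruence.
Qed.

Lemma sup_hg c : chain c -> forall t v, hg (supH c) t = Some v <-> exists n, hg (c n) t = Some v.
Proof.
  intros Hc t v. unfold supH. destruct (excluded_middle_informative _) as [Hx|Hx].
  - destruct (constructive_indefinite_description _ Hx) as [N HN]; simpl. split; eauto.
    intros [m Hm]. destruct (Nat.le_ge_cases m N).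
    + rewrite <- Hm. apply (chain_prefix Hc H). congruence.
    + rewrite (chain_end Hc H HN) in Hm. auto.
  - unfold hg at 1; simpl. rewrite mk_traj_ev. apply supg_spec; auto. apply supg_seg; auto.
Qed.

Lemma sup_hend c : chain c -> forall z, hend (supH c) = Some z <-> exists n, hend (c n) = Some z.
Proof.
  intros Hc z. unfold supH. destruct (excluded_middle_informative _) as [Hx|Hx].
  - destruct (constructive_indefinite_description _ Hx) as [N HN]; simpl. split; eauto.
    intros [m Hm]. destruct (Nat.le_ge_cases m N).
    + rewrite (chain_end Hc H) by congruence. auto.
    + rewrite (chain_end Hc H HN) in Hm. auto.
  - simpl. split; [discriminate|]. intros [n Hn]. elim Hx; exists n; congruence.
Qed.

Lemma opt_eq_char A (o1 o2 : option A) : (forall v, o1 = Some v <-> o2 = Some v) -> o1 = o2.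
Proof. intro H. destruct o1 as [a|]. symmetry; apply H; auto. destruct o2 as [b|]; auto. apply H; auto. Qed.

Lemma sup_char c p : chain c ->
  (forall t v, hg p t = Some v <-> exists n, hg (c n) t = Some v) ->
  (forall z, hend p = Some z <-> exists n, hend (c n) = Some z) -> supH c = p.
Proof.
  intros Hc H1 H2. apply H_ext.
  - apply functional_extensionality; intro t. apply opt_eq_char; intro v.
    rewrite sup_hg, H1; auto; tauto.
  - apply opt_eq_char; intro z. rewrite sup_hend, H2; auto; tauto.
Qed.

Lemma sup_ub c n : chain c -> Hle (c n) (supH c).
Proof.
  intro Hc. rewrite Hle_iff. destruct (hend (c n)) as [z|] eqn:E.
  - left. symmetry. apply sup_char; auto.
    + intros t v. split; eauto. intros [m Hm]. destruct (Nat.le_ge_cases m n).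
      rewrite <- Hm. apply (chain_prefix Hc H). congruence.
      rewrite (chain_end Hc H) in Hm by congruence. auto.
    + intros z'. split; eauto. intros [m Hm]. destruct (Nat.le_ge_cases m n).
      rewrite (chain_end Hc H) by congruence. auto.
      rewrite (chain_end Hc H) in Hm by congruence. auto.
  - right. split; auto. intros t Ht. destruct (hg (c n) t) eqn:E2; [|congruence].
    apply sup_hg; eauto.
Qed.

Lemma sup_least c u : chain c -> (forall n, Hle (c n) u) -> Hle (supH c) u.
Proof.
  intros Hc Hu. rewrite Hle_iff. destruct (hend (supH c)) as [z|] eqn:E.
  - left. apply sup_hend in E; auto. destruct E as [n Hn].
    specialize (Hu n). rewrite Hle_iff in Hu. destruct Hu as [Hu|[Hu _]]; [|congruence].
    subst u. apply sup_char; auto.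
    + intros t v. split; eauto. intros [m Hm]. destruct (Nat.le_ge_cases m n).
      rewrite <- Hm. apply (chain_prefix Hc H). congruence.
      rewrite (chain_end Hc H) in Hm by congruence. auto.
    + intros z'. split; eauto. intros [m Hm]. destruct (Nat.le_ge_cases m n).
      rewrite (chain_end Hc H) by congruence. auto.
      rewrite (chain_end Hc H) in Hm by congruence. auto.
  - right. split; auto. intros t Ht. destruct (hg (supH c) t) eqn:E2; [|congruence].
    apply sup_hg in E2; auto. destruct E2 as [n Hn]. specialize (Hu n). rewrite Hle_iff in Hu.
    destruct Hu as [Hu|[_ Hu]]. subst; auto. rewrite Hu; congruence.
Qed.

Lemma sup_const p : supH (fun _ => p) = p.
Proof.
  apply sup_char; [intro; apply Hle_refl| intros t v; split; [intro; exists 0%nat; auto| intros [_ H]; auto]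
   | intros z; split; [intro; exists 0%nat; auto| intros [_ H]; auto]].
Qed.

Lemma sup_shift c : chain c -> supH (fun n => c (Datatypes.S n)) = supH c.
Proof.
  intro Hc. apply sup_char. intro n; apply Hc.
  - intros t v. rewrite sup_hg; auto. split; intros [n Hn]; eauto.
    exists n. rewrite <- Hn. apply (chain_prefix Hc (le_S _ _ (le_n n)) t). congruence.
  - intros z. rewrite sup_hend; auto. split; intros [n Hn]; eauto.
    exists n. rewrite (chain_end Hc (le_S _ _ (le_n n))) by congruence. auto.
Qed.

End Order.
Open Scope R_scope.
Set Implicit Arguments.

Lemma shift_end_some X d (o : option (R * X)) r y :
  shift_end d o = Some (r, y) <-> o = Some (r - d, y).
Proof.
  destruct o as [[d' x]|]; simpl; split; intro H; try discriminate.
  - injection H; intros; subst. f_equal; f_equal; ring.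
  - injection H; intros; subst. f_equal; f_equal; ring.
Qed.

Section BindOrder.
Context {S : Type}.

Lemma prefix_bindH X Y (k : X -> H S Y) q : prefix (hg q) (hg (bindH k q)).
Proof.
  intros t Ht. rewrite bindH_hg. destruct (hend q) as [[d x]|] eqn:E; auto.
  unfold gconcat. destruct (Rlt_dec t d); auto. exfalso.
  pose proof (hg_WF q) as W. rewrite E in W. apply W in Ht. lra.
Qed.

Lemma bindH_mono X Y (k k' : X -> H S Y) p q : Hle p q -> (forall x, Hle (k x) (k' x)) ->
  Hle (bindH k p) (bindH k' q).
Proof.
  intros Hpq Hk. rewrite Hle_iff in Hpq. destruct Hpq as [Hpq|[Hp1 Hp2]].
  - subst q. destruct (hend p) as [[d x]|] eqn:E.
    + specialize (Hk x). rewrite Hle_iff in Hk. rewrite Hle_iff.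
      destruct Hk as [Hk|[Hk1 Hk2]].
      * left. apply H_ext; rewrite ?bindH_hg, ?bindH_hend, E, Hk; auto.
      * right. rewrite !bindH_hg, !bindH_hend, E, Hk1. split; auto.
        intros t Ht. unfold gconcat in *. destruct (Rlt_dec t d); auto.
    + left. apply H_ext; rewrite ?bindH_hg, ?bindH_hend, E; auto.
  - rewrite Hle_iff. right. rewrite bindH_hg, bindH_hend, Hp1. split; auto.
    eapply prefix_trans; eauto. apply prefix_bindH.
Qed.

Lemma bindH_chain X Y (k : nat -> X -> H S Y) p : (forall x, chain (fun n => k n x)) ->
  chain (fun n => bindH (k n) p).
Proof. intros Hc n. apply bindH_mono. apply Hle_refl. intro x; apply Hc. Qed.

Lemma bindH_sup_k X Y (k : nat -> X -> H S Y) p : (forall x, chain (fun n => k n x)) ->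
  bindH (fun x => supH (fun n => k n x)) p = supH (fun n => bindH (k n) p).
Proof.
  intro Hc. symmetry. apply sup_char. apply bindH_chain; auto.
  - intros t v. cbv beta.
    assert (E2 : forall n, hg (bindH (k n) p) = match hend p with
       | Some (d, x) => gconcat d (hg p) (hg (k n x)) | None => hg p end) by (intro; apply bindH_hg).
    rewrite bindH_hg. 
    destruct (hend p) as [[d x]|] eqn:E.
    + unfold gconcat. destruct (Rlt_dec t d) as [Hlt|Hlt].
      * split. intro H. exists 0%nat. rewrite E2. unfold gconcat. destruct (Rlt_dec t d); tauto.
        intros [n H]. rewrite E2 in H. unfold gconcat in H. destruct (Rlt_dec t d); tauto.
      * rewrite sup_hg; auto. split; intros [m H]; exists m; rewrite ?E2 in *; unfold gconcat in *;
        destruct (Rlt_dec t d); tauto.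
    + split. intro H. exists 0%nat. rewrite E2; auto. intros [n H]. rewrite E2 in H; auto.
  - intros z. cbv beta.
    assert (E2 : forall n, hend (bindH (k n) p) = match hend p with
       | Some (d, x) => shift_end d (hend (k n x)) | None => None end) by (intro; apply bindH_hend).
    rewrite bindH_hend.
    destruct (hend p) as [[d x]|] eqn:E.
    + destruct z as [r y]. rewrite shift_end_some, sup_hend; auto.
      split; intros [m H]; exists m; rewrite ?E2, ?shift_end_some in *; auto.
    + split; [discriminate|]. intros [n H]; rewrite E2 in H; discriminate.
Qed.

Lemma bindH_bot X Y (k : X -> H S Y) : bindH k botH = botH.
Proof. reflexivity. Qed.

End BindOrder.

Fixpoint kleeneH {S X Y} (f : X -> H S (Y + X)) (n : nat) : X -> H S Y :=
  match n with
  | O => fun _ => botH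
  | Datatypes.S n => iterH_step f (kleeneH f n)
  end.

Definition LH {S X Y} (f : X -> H S (Y + X)) : X -> H S Y :=
  fun x => supH (fun n => kleeneH f n x).

Section Kleene.
Context {S X Y : Type} (f : X -> H S (Y + X)).

Lemma copair_le A (g1 g2 : X -> H S Y) (e : A -> H S Y) : (forall x, Hle (g1 x) (g2 x)) ->
  forall v, Hle (copair e g1 v) (copair e g2 v).
Proof. intros H [a|x]; simpl; auto. apply Hle_refl. Qed.

Lemma kleeneH_chain x : chain (fun n => kleeneH f n x).
Proof.
  intro n. revert x. induction n; intro x.
  - apply botH_le.
  - simpl. unfold iterH_step. apply bindH_mono. apply Hle_refl. apply copair_le. exact IHn.
Qed.

Lemma LH_fix x : LH f x = iterH_step f (LH f) x.
Proof.
  unfold iterH_step.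
  assert (E : copair (@etaH S Y) (LH f) = fun v => supH (fun n => copair (@etaH S Y) (kleeneH f n) v)).
  { apply functional_extensionality; intros [y|x']; simpl. symmetry; apply sup_const. reflexivity. }
  rewrite E. rewrite bindH_sup_k.
  - unfold LH. rewrite <- (sup_shift (kleeneH_chain x)). reflexivity.
  - intros [y|x'] n; simpl. apply Hle_refl. apply kleeneH_chain.
Qed.

Lemma LH_least (g : X -> H S Y) : (forall x, g x = iterH_step f g x) -> forall x, Hle (LH f x) (g x).
Proof.
  intros Hg x. apply sup_least. apply kleeneH_chain.
  intro n. revert x. induction n; intro x.
  - apply botH_le.
  - simpl. rewrite Hg. unfold iterH_step. apply bindH_mono. apply Hle_refl. apply copair_le. auto.
Qed.

Lemma iterH_eq : iterH f = LH f.
Proof.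
  unfold iterH.
  match goal with |- epsilon ?i ?P = _ => assert (HP : P (epsilon i P)) end.
  { apply epsilon_spec. exists (LH f). split. apply LH_fix. apply LH_least. }
  destruct HP as [H1 H2]. apply functional_extensionality; intro x.
  apply Hle_antisym. apply H2. apply LH_fix. apply LH_least. auto.
Qed.

Lemma iterH_fix x : iterH f x = iterH_step f (iterH f) x.
Proof. rewrite iterH_eq. apply LH_fix. Qed.

End Kleene.
Open Scope R_scope.
Set Implicit Arguments.

Definition tauM {A S X} (M : A -> S + unit) (p : H A X) : H S X := tau (mapH M p : H (S + unit) X).

Definition okM {A S} (M : A -> S + unit) (g : R -> option A) (t : R) : Prop :=
  forall s, 0 <= s <= t -> exists v a, g s = Some v /\ M v = inl a.

Lemma okM_down A S (M : A -> S + unit) g t s : okM M g t -> s <= t -> okM M g s.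
Proof. intros H Hs u Hu. apply H. lra. Qed.

Lemma H_char S X (p q : H S X) : (forall t a, hg p t = Some a <-> hg q t = Some a) ->
  (forall z, hend p = Some z <-> hend q = Some z) -> p = q.
Proof.
  intros H1 H2. apply H_ext. apply functional_extensionality; intro t. apply opt_eq_char; auto.
  apply opt_eq_char; auto.
Qed.

Lemma tauM_hg A S X (M : A -> S + unit) (p : H A X) t a :
  hg (tauM M p) t = Some a <-> okM M (hg p) t /\ exists v, hg p t = Some v /\ M v = inl a.
Proof.
  unfold tauM. rewrite tau_hg, mapH_hg. unfold lp.
  destruct (decP _) eqn:E.
  - unfold decP in E. destruct (excluded_middle_informative _) as [Hx|Hx]; [|discriminate].
    split.
    + intro H. split.
      * intros s Hs. destruct (Hx s Hs) as [b Hb]. destruct (hg p s) as [v|] eqn:Ev; simpl in Hb; [|discriminate].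
        exists v, b. injection Hb; auto.
      * destruct (hg p t) as [v|]; simpl in H; [|discriminate]. exists v. split; auto.
        destruct (M v); [congruence|discriminate].
    + intros [_ [v [Hv HM]]]. rewrite Hv. simpl. rewrite HM. auto.
  - unfold decP in E. destruct (excluded_middle_informative _) as [Hx|Hx]; [discriminate|].
    split; [discriminate|]. intros [Hok _]. elim Hx. intros s Hs. destruct (Hok s Hs) as [v [b [Hv Hb]]].
    exists b. rewrite Hv; simpl; rewrite Hb; auto.
Qed.

Lemma okM_def A S (M : A -> S + unit) (g : R -> option A) t : 0 <= t -> okM M g t -> g t <> None.
Proof. intros Ht H. destruct (H t) as [v [a [Hv _]]]. lra. congruence. Qed.

Lemma tauM_hend A S X (M : A -> S + unit) (p : H A X) z :
  hend (tauM M p) = Some z <-> hend p = Some z /\ forall t, 0 <= t < fst z -> okM M (hg p) t.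
Proof.
  unfold tauM. rewrite tau_hend, mapH_hend, mapH_hg.
  destruct (hend p) as [[d x]|] eqn:E.
  2:{ split; [discriminate|]. intros [H _]; discriminate. }
  pose proof (hg_WF p) as W. rewrite E in W. simpl in W.
  assert (Hiff : (forall t, lp (fun t0 => option_map M (hg p t0)) t <> None <-> option_map M (hg p t) <> None)
                 <-> (forall t, 0 <= t < d -> okM M (hg p) t)).
  { split.
    - intros Hf t Ht. assert (Hl : lp (fun t0 => option_map M (hg p t0)) t <> None).
      { apply Hf. assert (hg p t <> None) by (apply W; auto). destruct (hg p t); simpl; congruence. }
      destruct (lp (fun t0 => option_map M (hg p t0)) t) as [a|] eqn:El; [|congruence].
      assert (hg (tauM M p) t = Some a) by (unfold tauM; rewrite tau_hg, mapH_hg; auto).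
      apply tauM_hg in H. tauto.
    - intros Hok t. split.
      + unfold lp. destruct (decP _); [|congruence]. destruct (hg p t) as [v|]; simpl; [congruence|].
        intro H; elim H; auto.
      + intro H. assert (Hd : hg p t <> None) by (destruct (hg p t); simpl in *; congruence).
        apply W in Hd. specialize (Hok t Hd). destruct (Hok t) as [v [a [Hv Ha]]]; [lra|].
        assert (hg (tauM M p) t = Some a) by (apply tauM_hg; split; eauto).
        unfold tauM in H0; rewrite tau_hg, mapH_hg in H0. congruence. }
  destruct (decP _) eqn:Ed.
  - unfold decP in Ed. destruct (excluded_middle_informative _) as [Hx|Hx]; [|discriminate].
    split. intro H; split; auto. injection H; intros; subst; simpl. apply Hiff; auto. intros [H _]; auto.
  - unfold decP in Ed. destruct (excluded_middle_informative _) as [Hx|Hx]; [discriminate|].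
    split; [discriminate|]. intros [H1 H2]. elim Hx. apply Hiff. injection H1; intros; subst. auto.
Qed.

Lemma bindH_hg_some S X Y (k : X -> H S Y) p t a :
  hg (bindH k p) t = Some a <->
  match hend p with
  | Some (d, x) => (t < d /\ hg p t = Some a) \/ (d <= t /\ hg (k x) (t - d) = Some a)
  | None => hg p t = Some a end.
Proof.
  rewrite bindH_hg. destruct (hend p) as [[d x]|]; [|tauto]. unfold gconcat.
  destruct (Rlt_dec t d) as [Hl|Hl].
  - split. intro H; left; auto. intros [[_ H]|[H _]]; auto; lra.
  - split. intro H; right; split; [lra|auto]. intros [[H _]|[_ H]]; auto; lra.
Qed.

Lemma bindH_none S X Y (k : X -> H S Y) p : hend p = None -> hg (bindH k p) = hg p /\ hend (bindH k p) = None.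
Proof. destruct p as [[m x]|e]; simpl; auto; discriminate. Qed.

Lemma hg_pos S X (p : H S X) t : hg p t <> None -> 0 <= t.
Proof. apply (proj1 (hg_seg p)). Qed.

Lemma hend_len S X (p : H S X) (d : R) (x : X) : hend p = Some (d, x) -> oseg (hg p) d.
Proof. intro E. pose proof (hg_WF p) as W. rewrite E in W. exact W. Qed.

Lemma tauM_none A S X (M : A -> S + unit) (p : H A X) : hend p = None -> hend (tauM M p) = None.
Proof.
  intro E. destruct (hend (tauM M p)) as [z|] eqn:E2; auto. apply tauM_hend in E2. destruct E2; congruence.
Qed.
Arguments hend_len {S X p d x} _.

Lemma tauM_bind A S X Y (M : A -> S + unit) (k : X -> H A Y) (p : H A X) :
  tauM M (bindH k p) = bindH (fun x => tauM M (k x)) (tauM M p).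
Proof.
  destruct (hend p) as [[d x]|] eqn:E.
  2:{ assert (Et : hend (tauM M p) = None) by (apply tauM_none; auto).
      apply H_ext.
      - rewrite (proj1 (bindH_none _ _ Et)). unfold tauM. rewrite !tau_hg, !mapH_hg.
        rewrite (proj1 (bindH_none _ _ E)). auto.
      - rewrite (proj2 (bindH_none _ _ Et)). apply tauM_none. apply bindH_none; auto. }
  pose proof (hend_len E) as W. assert (Hd0 : 0 <= d) by (destruct W; auto).
  destruct (classic (forall t, 0 <= t < d -> okM M (hg p) t)) as [Hf|Hnf].
  - assert (Et : hend (tauM M p) = Some (d, x)) by (apply tauM_hend; split; auto).
    assert (Hok : forall t, okM M (hg (bindH k p)) t <->
                 (t < d -> okM M (hg p) t) /\ (d <= t -> okM M (hg (k x)) (t - d))).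
    { intro t. split.
      - intros H. split.
        + intros Ht s Hs. destruct (H s) as [v [a [Hv Ha]]]; [lra|]. rewrite bindH_hg_some, E in Hv.
          exists v, a; split; auto. destruct Hv as [[_ Hv]|[Hv _]]; auto; lra.
        + intros Ht s Hs. destruct (H (s + d)) as [v [a [Hv Ha]]]; [lra|]. rewrite bindH_hg_some, E in Hv.
          exists v, a; split; auto. destruct Hv as [[Hv _]|[_ Hv]]; [lra|]. replace (s + d - d) with s in Hv by ring; auto.
      - intros [H1 H2] s Hs. destruct (Rlt_dec s d).
        + destruct (Hf s ltac:(lra) s ltac:(lra)) as [v [a [Hv Ha]]]. exists v, a. split; auto.
          rewrite bindH_hg_some, E. left; auto.
        + destruct (H2 ltac:(lra) (s - d)) as [v [a [Hv Ha]]]; [lra|]. exists v, a. split; auto.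
          rewrite bindH_hg_some, E. right; split; auto; lra. }
    apply H_char.
    + intros t a. rewrite tauM_hg, bindH_hg_some, Et, Hok. rewrite !tauM_hg.
      setoid_rewrite bindH_hg_some. rewrite E. split.
      * intros [[H1 H2] [v [Hv Ha]]]. destruct Hv as [[Ht Hv]|[Ht Hv]].
        -- left. split; [assumption|]. split; [apply H1; assumption| eauto].
        -- right. split; [assumption|]. split; [apply H2; assumption| eauto].
      * intros [[Ht [H1 [v [Hv Ha]]]]|[Ht [H1 [v [Hv Ha]]]]].
        -- split; [split; intro; [assumption|lra] | exists v; split; [left; split; assumption|assumption]].
        -- split; [split; intro; [lra|assumption] | exists v; split; [right; split; assumption|assumption]].
    + intros z. rewrite tauM_hend, !bindH_hend, E, Et. destruct z as [r y].
      rewrite !shift_end_some, tauM_hend. simpl. split.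
      * intros [H1 H2]. split; auto. intros t Ht. 
        assert (0 <= r - d) by (destruct (hend_len H1); auto).
        destruct (proj1 (Hok (t + d)) (H2 (t + d) ltac:(lra))) as [_ H3]. replace t with (t + d - d) by ring. apply H3; lra.
      * intros [H1 H2]. split; auto. intros t Ht. apply Hok. split; intro. apply Hf; lra.
        apply H2. split; [lra|]. lra.
  - assert (Et : hend (tauM M p) = None).
    { destruct (hend (tauM M p)) as [z|] eqn:E2; auto. apply tauM_hend in E2. destruct E2 as [E2 H2].
      rewrite E in E2. injection E2; intro; subst z. elim Hnf; auto. }
    apply not_all_ex_not in Hnf. destruct Hnf as [t0 Ht0].
    apply imply_to_and in Ht0. destruct Ht0 as [Ht0 Hnok].
    assert (Hbad : forall t, t0 <= t -> ~ okM M (hg (bindH k p)) t).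
    { intros t Ht Hok. apply Hnok. intros s Hs. destruct (Hok s) as [v [a [Hv Ha]]]; [lra|].
      exists v, a; split; auto. rewrite bindH_hg_some, E in Hv. destruct Hv as [[_ Hv]|[Hv _]]; auto. lra. }
    apply H_char.
    + intros t a. rewrite (proj1 (bindH_none _ _ Et)). rewrite !tauM_hg. setoid_rewrite bindH_hg_some. rewrite E. split.
      * intros [Hok [v [Hv Ha]]]. destruct (Rlt_dec t t0).
        -- destruct Hv as [[_ Hv]|[Hv _]]; [|lra]. split; eauto.
           intros s Hs. destruct (Hok s) as [v' [a' [Hv' Ha']]]; [lra|].
           rewrite bindH_hg_some, E in Hv'. exists v', a'. split; auto.
           destruct Hv' as [[_ Hv']|[Hv' _]]; auto; lra.
        -- elim (Hbad t); [lra|auto].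
      * intros [Hok [v [Hv Ha]]]. assert (t < t0).
        { destruct (Rlt_dec t t0); auto. elim Hnok. apply (okM_down Hok). lra. }
        split; [|exists v; split; auto; left; split; auto; lra].
        intros s Hs. destruct (Hok s) as [v' [a' [Hv' Ha']]]; [lra|]. exists v', a'. split; auto.
        rewrite bindH_hg_some, E. left; split; auto. lra.
    + intros z. rewrite (proj2 (bindH_none _ _ Et)). split; [|discriminate]. intro H. apply tauM_hend in H.
      destruct H as [H1 H2]. rewrite bindH_hend, E in H1. destruct z as [r y].
      apply shift_end_some in H1. destruct (hend_len H1) as [Hr _]. simpl in H2.
      elim (Hbad t0). lra. apply H2. lra.
Qed.
Open Scope R_scope.
Set Implicit Arguments.

Lemma sup_end_eq S X (c : nat -> H S X) n : chain c -> hend (c n) <> None -> supH c = c n.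
Proof.
  intros Hc Hn. pose proof (sup_ub n Hc) as H. rewrite Hle_iff in H. destruct H as [H|[H _]]; auto. contradiction.
Qed.

Lemma hg_seg_def S X (p : H S X) s t : 0 <= s -> s <= t -> hg p t <> None -> hg p s <> None.
Proof. apply (proj2 (hg_seg p)). Qed.

Section TauLemmas.
Context {A S : Type}.

Lemma tauM_eta X (M : A -> S + unit) (x : X) : tauM M (etaH A x) = etaH S x.
Proof.
  apply H_char.
  - intros t a. rewrite tauM_hg. simpl. split; [intros [_ [v [Hv _]]]; discriminate| discriminate].
  - intros z. rewrite tauM_hend. simpl. split; [intros [H _]; auto| intro H; split; auto].
    intros t Ht. injection H; intro Hz; subst z. cbn in Ht. lra.
Qed.

Lemma tauM_bot X (M : A -> S + unit) : tauM M (botH : H A X) = botH.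
Proof.
  apply H_char.
  - intros t a. rewrite tauM_hg. simpl. split; [intros [_ [v [Hv _]]]; discriminate| discriminate].
  - intros z. rewrite tauM_hend. simpl. split; [intros [H _]; discriminate| discriminate].
Qed.

Lemma okM_prefix (M : A -> S + unit) g1 g2 t : prefix g1 g2 -> okM M g1 t -> okM M g2 t.
Proof.
  intros Hp H s Hs. destruct (H s Hs) as [v [a [Hv Ha]]]. exists v, a. split; auto.
  rewrite Hp; congruence.
Qed.

Lemma tauM_mono_p X (M : A -> S + unit) (p q : H A X) : Hle p q -> Hle (tauM M p) (tauM M q).
Proof.
  rewrite !Hle_iff. intros [H|[H1 H2]]; [subst; auto|]. right. split.
  - apply tauM_none; auto.
  - intros t Ht. destruct (hg (tauM M p) t) as [a|] eqn:E; [|congruence].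
    apply tauM_hg in E. destruct E as [Hok [v [Hv Ha]]]. apply tauM_hg. split.
    eapply okM_prefix; eauto. exists v. split; auto. rewrite H2; congruence.
Qed.

Definition Mle (M M' : A -> S + unit) : Prop := forall v a, M v = inl a -> M' v = inl a.

Lemma okM_Mle (M M' : A -> S + unit) g t : Mle M M' -> okM M g t -> okM M' g t.
Proof. intros HM H s Hs. destruct (H s Hs) as [v [a [Hv Ha]]]. exists v, a; split; auto. Qed.

Lemma tauM_mono_M X (M M' : A -> S + unit) (p : H A X) : Mle M M' -> Hle (tauM M p) (tauM M' p).
Proof.
  intro HM. rewrite Hle_iff. destruct (hend (tauM M p)) as [[d x]|] eqn:E.
  - left. pose proof E as E'. apply tauM_hend in E'. destruct E' as [Ep Hf]. simpl in Hf.
    pose proof (hend_len Ep) as W.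
    apply H_char.
    + intros t a. rewrite !tauM_hg. split.
      * intros [Hok [v [Hv Ha]]]. split. eapply okM_Mle; eauto. exists v; split; auto.
      * intros [Hok [v [Hv Ha]]]. assert (Ht : 0 <= t < d) by (apply W; congruence).
        specialize (Hf t Ht). destruct (Hf t) as [v' [a' [Hv' Ha']]]; [lra|].
        assert (v' = v) by congruence. subst v'. pose proof (HM _ _ Ha') as Hm'. rewrite Hm' in Ha. injection Ha; intro; subst.
        split; auto. exists v; split; auto.
    + intros z. rewrite E, tauM_hend. split.
      * intro H; injection H; intros; subst; simpl. split; auto. intros t Ht. eapply okM_Mle; eauto.
      * intros [H _]. congruence.
  - right. split; auto. intros t Ht. destruct (hg (tauM M p) t) as [a|] eqn:E2; [|congruence].
    apply tauM_hg in E2. destruct E2 as [Hok [v [Hv Ha]]]. apply tauM_hg. split.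
    eapply okM_Mle; eauto. exists v. split; auto.
Qed.

Lemma tauM_chain X (M : A -> S + unit) (c : nat -> H A X) : chain c -> chain (fun n => tauM M (c n)).
Proof. intros Hc n. apply tauM_mono_p. apply Hc. Qed.

Lemma tauM_sup X (M : A -> S + unit) (c : nat -> H A X) : chain c ->
  tauM M (supH c) = supH (fun n => tauM M (c n)).
Proof.
  intro Hc. symmetry. apply sup_char. apply tauM_chain; auto.
  - intros t a. rewrite tauM_hg. split.
    + intros [Hok [v [Hv Ha]]]. apply sup_hg in Hv; auto. destruct Hv as [n Hn].
      exists n. apply tauM_hg. split; [|exists v; split; auto].
      intros s Hs. destruct (Hok s Hs) as [v' [a' [Hv' Ha']]]. exists v', a'. split; auto.
      pose proof (sup_ub n Hc) as Hle. rewrite Hle_iff in Hle.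
      assert (hg (c n) s <> None) by (apply hg_seg_def with t; try lra; congruence).
      destruct Hle as [Hle|[_ Hle]]. rewrite Hle; auto. rewrite <- Hv'. symmetry. apply Hle; auto.
    + intros [n Hn]. cbv beta in Hn. apply tauM_hg in Hn. destruct Hn as [Hok [v [Hv Ha]]].
      pose proof (sup_ub n Hc) as Hle. assert (Hp : prefix (hg (c n)) (hg (supH c))).
      { rewrite Hle_iff in Hle. destruct Hle as [Hle|[_ Hle]]; auto. rewrite <- Hle. intros u Hu; auto. }
      split. eapply okM_prefix; eauto. exists v; split; auto. rewrite Hp; congruence.
  - intros z. rewrite tauM_hend. split.
    + intros [H1 H2]. apply sup_hend in H1; auto. destruct H1 as [n Hn]. exists n. cbv beta.
      apply tauM_hend. split; auto. rewrite <- (@sup_end_eq _ _ c n); auto. congruence.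
    + intros [n Hn]. cbv beta in Hn. apply tauM_hend in Hn. destruct Hn as [H1 H2].
      rewrite (@sup_end_eq _ _ c n); auto. congruence.
Qed.

Lemma tauM_inl X (p : H A X) : tauM (@inl A unit) p = p.
Proof.
  apply H_char.
  - intros t a. rewrite tauM_hg. split.
    + intros [_ [v [Hv Ha]]]. injection Ha; intro; subst; auto.
    + intro H. split; [|exists a; split; auto].
      intros s Hs. destruct (hg p s) as [v|] eqn:E.
      * exists v, v; auto.
      * exfalso. apply (hg_seg_def p (proj1 Hs) (proj2 Hs)); congruence.
  - intros z. rewrite tauM_hend. split; [intros [H _]; auto|]. intro H; split; auto.
    destruct z as [d x]. pose proof (hend_len H) as W. simpl. intros t Ht s Hs.
    destruct (hg p s) as [v|] eqn:E. exists v, v; auto.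
    exfalso. assert (0 <= s < d) by lra. apply W in H0. congruence.
Qed.
End TauLemmas.

Definition compM {A B S} (N : B -> S + unit) (M : A -> B + unit) : A -> S + unit :=
  fun v => match M v with inl b => N b | inr u => inr u end.

Lemma tauM_comp A B S X (N : B -> S + unit) (M : A -> B + unit) (p : H A X) :
  tauM N (tauM M p) = tauM (compM N M) p.
Proof.
  assert (Hok : forall t, okM N (hg (tauM M p)) t <-> okM (compM N M) (hg p) t).
  { intro t. split.
    - intros H s Hs. destruct (H s Hs) as [b [a [Hb Ha]]]. apply tauM_hg in Hb.
      destruct Hb as [_ [v [Hv Hm]]]. exists v, a. split; auto. unfold compM. rewrite Hm; auto.
    - intros H s Hs. destruct (H s Hs) as [v [a [Hv Ha]]]. unfold compM in Ha.
      destruct (M v) as [b|u] eqn:Em; [|discriminate]. exists b, a. split; auto.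
      apply tauM_hg. split; [|exists v; auto].
      intros u Hu. destruct (H u ltac:(lra)) as [v' [a' [Hv' Ha']]]. unfold compM in Ha'.
      destruct (M v') as [b'|] eqn:Em'; [|discriminate]. exists v', b'; auto. }
  apply H_char.
  - intros t a. rewrite !tauM_hg, Hok. split.
    + intros [Ho [b [Hb Hn]]]. apply tauM_hg in Hb. destruct Hb as [_ [v [Hv Hm]]].
      split; auto. exists v; split; auto. unfold compM; rewrite Hm; auto.
    + intros [Ho [v [Hv Hc]]]. split; auto. unfold compM in Hc. destruct (M v) as [b|] eqn:Em; [|discriminate].
      exists b. split; auto. apply tauM_hg. split; [|exists v; auto].
      intros u Hu. destruct (Ho u Hu) as [v' [a' [Hv' Ha']]]. unfold compM in Ha'.
      destruct (M v') as [b'|] eqn:Em'; [|discriminate]. exists v', b'; auto.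
  - intros z. rewrite !tauM_hend. split.
    + intros [[H1 H2] H3]. split; auto. intros t Ht. apply Hok; auto.
    + intros [H1 H2]. split; [split; auto|].
      * intros t Ht. intros u Hu. destruct (H2 t Ht u Hu) as [v' [a' [Hv' Ha']]]. unfold compM in Ha'.
        destruct (M v') as [b'|] eqn:Em'; [|discriminate]. exists v', b'; auto.
      * intros t Ht. apply Hok; auto.
Qed.

Lemma tauM_map A B S X (M : B -> S + unit) (k : A -> B) (p : H A X) :
  tauM M (mapH k p) = tauM (fun v => M (k v)) p.
Proof.
  assert (Hok : forall t, okM M (hg (mapH k p)) t <-> okM (fun v => M (k v)) (hg p) t).
  { intro t. rewrite mapH_hg. split.
    - intros H s Hs. destruct (H s Hs) as [b [a [Hb Ha]]]. destruct (hg p s) as [v|]; simpl in Hb; [|discriminate].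
      injection Hb; intro; subst. exists v, a; auto.
    - intros H s Hs. destruct (H s Hs) as [v [a [Hv Ha]]]. rewrite Hv. exists (k v), a; auto. }
  apply H_char.
  - intros t a. rewrite !tauM_hg, Hok, mapH_hg. split.
    + intros [Ho [b [Hb Ha]]]. split; auto. destruct (hg p t) as [v|]; simpl in Hb; [|discriminate].
      injection Hb; intro; subst. eauto.
    + intros [Ho [v [Hv Ha]]]. split; auto. rewrite Hv. simpl. eauto.
  - intros z. rewrite !tauM_hend, mapH_hend. split; intros [H1 H2]; split; auto; intros t Ht; apply Hok; auto.
Qed.

Lemma iotaH_char A X (p : H A X) : iotaH p =
  match hg p 0 with Some a => inr (inl a) | None =>
    match hend p with Some (_, x) => inl x | None => inr (inr tt) end end.
Proof. destruct p as [[m x]|e]; reflexivity. Qed.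

Lemma hend_zero A X (p : H A X) d x : hend p = Some (d, x) -> hg p 0 = None -> d = 0.
Proof.
  intros E H0. destruct (hend_len E) as [Hd W]. destruct (Rlt_dec 0 d); [|lra].
  exfalso. assert (0 <= 0 < d) by lra. apply W in H. auto.
Qed.

Arguments hend_zero {A X p d x} _ _.
Lemma hend_pos A X (p : H A X) d x : hend p = Some (d, x) -> hg p 0 <> None -> 0 < d.
Proof. intros E H0. destruct (hend_len E) as [Hd W]. apply W in H0. lra. Qed.
Arguments hend_pos {A X p d x} _ _.

Lemma iotaH_bind A X Y (k : X -> H A Y) (p : H A X) :
  iotaH (bindH k p) = match iotaH p with inl x => iotaH (k x) | inr z => inr z end.
Proof.
  rewrite !iotaH_char. rewrite bindH_hg, bindH_hend.
  destruct (hend p) as [[d x]|] eqn:E.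
  - destruct (hg p 0) as [a|] eqn:E0.
    + assert (0 < d) by (apply (hend_pos E); congruence). unfold gconcat.
      destruct (Rlt_dec 0 d); [|lra]. rewrite E0. auto.
    + assert (d = 0) by (apply (hend_zero E); auto). subst d. unfold gconcat.
      destruct (Rlt_dec 0 0); [lra|]. replace (0 - 0) with 0 by ring. rewrite iotaH_char.
      destruct (hg (k x) 0); auto. destruct (hend (k x)) as [[d' y]|]; simpl; auto.
  - destruct (hg p 0); auto.
Qed.

Lemma iotaH_tauM A S X (M : A -> S + unit) (p : H A X) :
  iotaH (tauM M p) = match iotaH p with
    | inl x => inl x
    | inr (inl v) => match M v with inl a => inr (inl a) | inr u => inr (inr u) end
    | inr (inr u) => inr (inr u) end.
Proof.
  rewrite !iotaH_char.
  destruct (hg p 0) as [v|] eqn:E0.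
  - destruct (M v) as [a|[]] eqn:Em.
    + assert (hg (tauM M p) 0 = Some a).
      { apply tauM_hg. split; [|exists v; auto]. intros s Hs. assert (s = 0) by lra. subst. exists v, a; auto. }
      rewrite H; auto.
    + assert (hg (tauM M p) 0 = None).
      { destruct (hg (tauM M p) 0) as [a|] eqn:E; auto. apply tauM_hg in E. destruct E as [_ [v' [Hv' Ha']]]. congruence. }
      rewrite H. destruct (hend (tauM M p)) as [[d x]|] eqn:Et; auto.
      apply tauM_hend in Et. destruct Et as [Ep Hf]. simpl in Hf.
      assert (0 < d) by (apply (hend_pos Ep); congruence). destruct (Hf 0 ltac:(lra) 0 ltac:(lra)) as [v' [a' [Hv' Ha']]].
      congruence.
  - assert (hg (tauM M p) 0 = None).
    { destruct (hg (tauM M p) 0) as [a|] eqn:E; auto. apply tauM_hg in E. destruct E as [_ [v' [Hv' Ha']]]. congruence. }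
    rewrite H. destruct (hend p) as [[d x]|] eqn:Ep.
    + assert (d = 0) by (apply (hend_zero Ep); auto). subst d.
      assert (hend (tauM M p) = Some (0, x)) by (apply tauM_hend; split; auto; simpl; intros; lra).
      rewrite H0. auto.
    + rewrite tauM_none; auto.
Qed.
Open Scope R_scope.
Set Implicit Arguments.

Lemma iota'_char S (p : Tm S) : iota' p =
  match hg p 0 with Some s => inl s | None =>
    match hend p with Some (_, x) => inl x | None => inr tt end end.
Proof.
  unfold iota'. rewrite iotaH_char. destruct (hg p 0); simpl; auto.
  destruct (hend p) as [[d x]|]; simpl; auto.
Qed.

Definition NT {X S} (f : X -> Tm S) : X -> S + unit := fun x => iota' (f x).

Lemma bindT_eq X S (f : X -> Tm S) (p : Tm X) : bindT f p = bindH f (tauM (NT f) p).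
Proof. reflexivity. Qed.

Lemma iota'_bindH S X (g : X -> Tm S) (r : H S X) :
  iota' (bindH g r) = match iotaH r with inl y => iota' (g y) | inr (inl s) => inl s | inr (inr u) => inr u end.
Proof.
  unfold iota' at 1. rewrite iotaH_bind. destruct (iotaH r) as [y|[s|u]]; simpl; auto.
Qed.

Lemma iota'_bindT X S (g : X -> Tm S) (q : Tm X) :
  iota' (bindT g q) = match iota' q with inl y => iota' (g y) | inr u => inr u end.
Proof.
  rewrite bindT_eq, iota'_bindH, iotaH_tauM. unfold iota'. unfold NT.
  destruct (iotaH q) as [y|[v|u]]; simpl; auto.
  change (copair inl (fun z => z) (iotaH (g v))) with (iota' (g v)). destruct (iota' (g v)); auto.
Qed.

Lemma NT_eta S : NT (@etaT S) = @inl S unit.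
Proof. reflexivity. Qed.

Lemma bindT_ret_l X S (f : X -> Tm S) (x : X) : bindT f (etaT x) = f x.
Proof. rewrite bindT_eq. unfold etaT. rewrite tauM_eta. apply bindH_eta_l. Qed.

Lemma bindT_ret_r X (p : Tm X) : bindT (@etaT X) p = p.
Proof. rewrite bindT_eq, NT_eta, tauM_inl. apply bindH_eta_r. Qed.

Lemma bindT_assoc X Y Z (f : X -> Tm Y) (g : Y -> Tm Z) (p : Tm X) :
  bindT g (bindT f p) = bindT (fun x => bindT g (f x)) p.
Proof.
  rewrite !bindT_eq. rewrite tauM_bind, bindH_assoc, tauM_comp.
  assert (E : compM (NT g) (NT f) = NT (fun x => bindT g (f x))).
  { apply functional_extensionality; intro x. unfold compM, NT. rewrite iota'_bindT. auto. }
  rewrite E. reflexivity.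
Qed.

Lemma iota'_mono S (p q : Tm S) a : Hle p q -> iota' p = inl a -> iota' q = inl a.
Proof.
  rewrite Hle_iff. intros [H|[H1 H2]]; [subst; auto|]. rewrite !iota'_char, H1.
  destruct (hg p 0) as [s|] eqn:E; [|discriminate]. intro Ha. rewrite H2; [|congruence]. rewrite E. auto.
Qed.

Lemma bindT_mono X S (f g : X -> Tm S) p q : (forall a, Hle (f a) (g a)) -> Hle p q ->
  Hle (bindT f p) (bindT g q).
Proof.
  intros Hfg Hpq. rewrite !bindT_eq. apply bindH_mono; auto.
  eapply Hle_trans. apply tauM_mono_p. exact Hpq. apply tauM_mono_M.
  intros v a Ha. unfold NT in *. eapply iota'_mono; eauto.
Qed.

Lemma sup_eventually S X (d : nat -> H S X) N : chain d -> (forall m, (N <= m)%nat -> d m = d N) ->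
  supH d = d N.
Proof.
  intros Hc HN. apply sup_char; auto.
  - intros t v. split; eauto. intros [m Hm]. destruct (Nat.le_ge_cases m N).
    + rewrite <- Hm. apply (chain_prefix Hc H). congruence.
    + rewrite HN in Hm; auto.
  - intros z. split; eauto. intros [m Hm]. destruct (Nat.le_ge_cases m N).
    + rewrite (chain_end Hc H) by congruence. auto.
    + rewrite HN in Hm; auto.
Qed.

Lemma bindH_sup_p S X Y (g : X -> H S Y) (c : nat -> H S X) : chain c ->
  bindH g (supH c) = supH (fun n => bindH g (c n)).
Proof.
  intro Hc. assert (Hc' : chain (fun n => bindH g (c n))).
  { intro n. apply bindH_mono. apply Hc. intro; apply Hle_refl. }
  destruct (classic (exists n, hend (c n) <> None)) as [[N HN]|Hno].
  - rewrite (@sup_end_eq _ _ c N Hc HN). symmetry. apply (sup_eventually Hc'). intros m Hm.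
    rewrite (chain_end Hc Hm HN). auto.
  - assert (Hcn : forall n, hend (c n) = None).
    { intro n. destruct (hend (c n)) eqn:E; auto. elim Hno; exists n; congruence. }
    assert (Hs : hend (supH c) = None).
    { destruct (hend (supH c)) as [z|] eqn:E; auto. apply sup_hend in E; auto. destruct E as [n Hn].
      rewrite Hcn in Hn; discriminate. }
    symmetry. apply sup_char; auto.
    + intros t v. cbv beta.
      rewrite (proj1 (bindH_none g _ Hs)), sup_hg; auto.
      split; intros [n Hn]; exists n.
      * rewrite (proj1 (bindH_none g _ (Hcn n))); auto.
      * rewrite (proj1 (bindH_none g _ (Hcn n))) in Hn; auto.
    + intros z. cbv beta. rewrite (proj2 (bindH_none g _ Hs)). split; [discriminate|].
      intros [n Hn]. rewrite (proj2 (bindH_none g _ (Hcn n))) in Hn. discriminate.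
Qed.

Lemma bindT_sup_p X S (g : X -> Tm S) (c : nat -> Tm X) : chain c ->
  bindT g (supH c) = supH (fun n => bindT g (c n)).
Proof.
  intro Hc. rewrite bindT_eq, tauM_sup; auto. rewrite bindH_sup_p. reflexivity.
  apply tauM_chain; auto.
Qed.

Lemma bindT_bot X S (g : X -> Tm S) : bindT g botH = botH.
Proof. rewrite bindT_eq, tauM_bot. reflexivity. Qed.
Open Scope R_scope.
Set Implicit Arguments.

Inductive MI {X Y} (F : X -> (Y + X) + unit) : X -> Y -> Prop :=
| mi_done x y : F x = inl (inl y) -> MI F x y
| mi_step x x' y : F x = inl (inr x') -> MI F x' y -> MI F x y.

Section Maybe.
Context {X Y : Type} (F : X -> (Y + X) + unit).

Lemma MI_unique x y y' : MI F x y -> MI F x y' -> y = y'.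
Proof.
  intro H. revert y'. induction H as [x y H|x x' y H HM IH]; intros y' H';
    inversion H' as [x0 y0 H1|x0 x0' y0 H1 H2]; subst.
  - rewrite H in H1. injection H1; auto.
  - rewrite H in H1. discriminate.
  - rewrite H in H1. discriminate.
  - rewrite H in H1. injection H1; intro; subst. apply IH; auto.
Qed.

Lemma iter_inl_inl n y : Nat.iter n (maybe_step F) (inl (inl y)) = inl (inl y).
Proof. induction n; simpl; auto. rewrite IHn; auto. Qed.
Lemma iter_inr n : Nat.iter n (maybe_step F) (inr tt) = inr tt.
Proof. induction n; simpl; auto. rewrite IHn; auto. Qed.

Lemma iter_MI n x y : Nat.iter n (maybe_step F) (inl (inr x)) = inl (inl y) -> MI F x y.
Proof.
  revert x. induction n; intros x H; simpl in H; [discriminate|].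
  rewrite <- Nat.iter_succ in H. rewrite Nat.iter_succ_r in H. simpl in H.
  destruct (F x) as [[y'|x']|[]] eqn:E.
  - rewrite iter_inl_inl in H. injection H; intro; subst. apply mi_done; auto.
  - apply mi_step with x'; auto.
  - rewrite iter_inr in H. discriminate.
Qed.

Lemma MI_iter x y : MI F x y -> exists n, Nat.iter n (maybe_step F) (inl (inr x)) = inl (inl y).
Proof.
  induction 1.
  - exists 1%nat. simpl. rewrite H. auto.
  - destruct IHMI as [n Hn]. exists (S n). rewrite Nat.iter_succ_r. simpl. rewrite H. auto.
Qed.

Lemma maybe_iter_MI x y : maybe_iter F x = inl y <-> MI F x y.
Proof.
  unfold maybe_iter. destruct (excluded_middle_informative _) as [Hx|Hx].
  - destruct (constructive_indefinite_description _ Hx) as [y0 Hy0]; simpl.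
    destruct Hy0 as [n Hn]. apply iter_MI in Hn. split.
    + intro H; injection H; intro; subst; auto.
    + intro H. f_equal. eapply MI_unique; eauto.
  - split; [discriminate|]. intro H. elim Hx. exists y. apply MI_iter; auto.
Qed.

Lemma maybe_iter_none x : maybe_iter F x = inr tt <-> forall y, ~ MI F x y.
Proof.
  split.
  - intros H y Hm. apply maybe_iter_MI in Hm. congruence.
  - intro H. destruct (maybe_iter F x) as [y|[]] eqn:E; auto. apply maybe_iter_MI in E. elim (H y E).
Qed.
End Maybe.

Lemma iota'_tauM A S (M : A -> S + unit) (p : H A S) :
  iota' (tauM M p) = match iotaH p with inl s => inl s | inr (inl v) => M v | inr (inr u) => inr u end.
Proof.
  unfold iota' at 1. rewrite iotaH_tauM. destruct (iotaH p) as [s|[v|u]]; simpl; auto.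
  destruct (M v); auto.
Qed.

Lemma iotaH_sup S X (c : nat -> H S X) : chain c -> exists n, iotaH (supH c) = iotaH (c n).
Proof.
  intro Hc. rewrite iotaH_char. destruct (hg (supH c) 0) as [a|] eqn:E.
  - apply sup_hg in E; auto. destruct E as [n Hn]. exists n. rewrite iotaH_char, Hn. auto.
  - assert (Hn0 : forall n, hg (c n) 0 = None).
    { intro n. destruct (hg (c n) 0) as [a|] eqn:E2; auto. assert (hg (supH c) 0 = Some a) by (apply sup_hg; eauto). congruence. }
    destruct (hend (supH c)) as [[d x]|] eqn:E2.
    + apply sup_hend in E2; auto. destruct E2 as [n Hn]. exists n. rewrite iotaH_char, Hn0, Hn. auto.
    + exists 0%nat. rewrite iotaH_char, Hn0. destruct (hend (c 0%nat)) as [z|] eqn:E3; auto.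
      assert (hend (supH c) = Some z) by (apply sup_hend; eauto). congruence.
Qed.

Definition Mf {X S} (f : X -> Tm (S + X)) : S + X -> S + unit :=
  copair (@inl S unit) (maybe_iter (fun x' => iota' (f x'))).

Definition PhiT {X S} (f : X -> Tm (S + X)) (k : X -> Tm S) : X -> Tm S :=
  fun x => bindT (copair (@etaT S) k) (f x).

Section IterT.
Context {X S : Type} (f : X -> Tm (S + X)).
Let F := fun x' => iota' (f x').

Lemma iterT_eq x : iterT f x = tauM (Mf f) (iterH f x).
Proof. reflexivity. Qed.

Definition psi (j : S + ((S + X) + unit)) : S + unit :=
  match j with inl s => inl s | inr (inl v) => Mf f v | inr (inr u) => inr u end.

Lemma iota'_iterT_psi x : iota' (iterT f x) = psi (iotaH (iterH f x)).
Proof. rewrite iterT_eq, iota'_tauM. reflexivity. Qed.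

Lemma iotaH_step (k : X -> H (S + X) S) x :
  iotaH (iterH_step f k x) = match iotaH (f x) with inl (inl s) => inl s | inl (inr x') => iotaH (k x')
                              | inr z => inr z end.
Proof.
  unfold iterH_step. rewrite iotaH_bind. destruct (iotaH (f x)) as [[s|x']|z]; simpl; auto.
Qed.

Lemma F_char x : F x = match iotaH (f x) with inl v => inl v | inr z => z end.
Proof. unfold F, iota'. destruct (iotaH (f x)); auto. Qed.

Lemma psi_MI_A x s : MI F x s -> psi (iotaH (iterH f x)) = inl s.
Proof.
  induction 1 as [x s H|x x' s H HM IH].
  - rewrite iterH_fix, iotaH_step. rewrite F_char in H.
    destruct (iotaH (f x)) as [[s'|x']|[v|u]] eqn:E; simpl in *.
    + injection H; intros; subst; reflexivity.
    + discriminate.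
    + injection H; intro; subst v. reflexivity.
    + discriminate.
  - rewrite iterH_fix, iotaH_step. rewrite F_char in H.
    destruct (iotaH (f x)) as [[s'|x'']|[v|u]] eqn:E; simpl in *.
    + discriminate.
    + injection H; intro; subst. exact IH.
    + injection H; intro; subst v. simpl. apply maybe_iter_MI; auto.
    + discriminate.
Qed.

Lemma psi_MI_B x s : psi (iotaH (iterH f x)) = inl s -> MI F x s.
Proof.
  rewrite iterH_eq. unfold LH. destruct (iotaH_sup (kleeneH_chain f x)) as [n Hn]. rewrite Hn.
  clear Hn. revert x. induction n; intros x H.
  - simpl in H. discriminate.
  - simpl in H. rewrite iotaH_step in H.
    destruct (iotaH (f x)) as [[s'|x']|[v|u]] eqn:E; simpl in H.
    + injection H; intro; subst. apply mi_done. rewrite F_char, E. auto.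
    + apply mi_step with x'. rewrite F_char, E; auto. apply IHn; auto.
    + destruct v as [s'|x']; simpl in H.
      * injection H; intro; subst. apply mi_done. rewrite F_char, E. auto.
      * apply maybe_iter_MI in H. apply mi_step with x'; auto. rewrite F_char, E; auto.
    + discriminate.
Qed.

Lemma iota'_iterT x : iota' (iterT f x) = maybe_iter F x.
Proof.
  rewrite iota'_iterT_psi. destruct (maybe_iter F x) as [s|[]] eqn:E.
  - apply maybe_iter_MI in E. apply psi_MI_A; auto.
  - destruct (psi (iotaH (iterH f x))) as [s|[]] eqn:E2; auto.
    apply psi_MI_B in E2. apply maybe_iter_MI in E2. congruence.
Qed.

Lemma iterT_fix x : iterT f x = PhiT f (iterT f) x.
Proof.
  rewrite iterT_eq, iterH_fix. unfold iterH_step, PhiT. rewrite tauM_bind, bindT_eq.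
  assert (E1 : (fun v => tauM (Mf f) (copair (@etaH (S + X) S) (iterH f) v)) = copair (@etaT S) (iterT f)).
  { apply functional_extensionality; intros [s|x']; simpl. apply tauM_eta. reflexivity. }
  assert (E2 : NT (copair (@etaT S) (iterT f)) = Mf f).
  { apply functional_extensionality; intros [s|x']; unfold NT; simpl. reflexivity.
    apply iota'_iterT. }
  rewrite E1, E2. reflexivity.
Qed.

Lemma iterT_least (a : X -> Tm S) : (forall x, Hle (PhiT f a x) (a x)) -> forall x, Hle (iterT f x) (a x).
Proof.
  intros Ha.
  assert (HMI : forall x s, MI F x s -> iota' (a x) = inl s).
  { induction 1 as [x s H|x x' s H HM IH].
    - apply (iota'_mono (Ha x)). unfold PhiT. rewrite iota'_bindT. fold (F x). rewrite H. reflexivity.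
    - apply (iota'_mono (Ha x)). unfold PhiT. rewrite iota'_bindT. fold (F x). rewrite H. simpl. auto. }
  intro x. rewrite iterT_eq, iterH_eq. unfold LH. rewrite tauM_sup by apply kleeneH_chain.
  apply sup_least. apply tauM_chain, kleeneH_chain.
  intro n. revert x. induction n; intro x.
  - simpl. rewrite tauM_bot. apply botH_le.
  - simpl. unfold iterH_step. rewrite tauM_bind. eapply Hle_trans; [|apply Ha].
    unfold PhiT. rewrite bindT_eq. apply bindH_mono.
    + apply tauM_mono_M. intros [s|x'] b Hb; unfold NT; simpl in *.
      * exact Hb.
      * apply HMI. apply maybe_iter_MI. exact Hb.
    + intros [s|x']; simpl. rewrite tauM_eta. apply Hle_refl. apply IHn.
Qed.
End IterT.
Open Scope R_scope.
Set Implicit Arguments.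

Section Nat.
Context {X Y Z : Type} (f : X -> Tm (Y + X)) (g : Y -> Tm Z).

Definition fnat : X -> Tm (Z + X) := fun x' =>
  bindT (copair (fun y => bindT (fun z => etaT (@inl Z X z)) (g y)) (fun x'' => etaT (@inr Z X x''))) (f x').

Lemma Phi_fnat (K : X -> Tm Z) x : PhiT fnat K x = bindT (copair g K) (f x).
Proof.
  unfold PhiT, fnat. rewrite bindT_assoc. f_equal. apply functional_extensionality; intros [y|x'']; simpl.
  - rewrite bindT_assoc. rewrite <- (bindT_ret_r (g y)) at 2. f_equal.
    apply functional_extensionality; intro z. rewrite bindT_ret_l. reflexivity.
  - rewrite bindT_ret_l. reflexivity.
Qed.

Lemma natural_ge x : Hle (iterT fnat x) (bindT g (iterT f x)).
Proof.
  revert x. apply (iterT_least fnat (fun x => bindT g (iterT f x))). intro x'. rewrite Phi_fnat. rewrite (iterT_fix f x'). unfold PhiT.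
  rewrite bindT_assoc. replace (fun x0 => bindT g (copair (@etaT Y) (iterT f) x0)) with
    (copair g (fun x0 => bindT g (iterT f x0))). apply Hle_refl.
  apply functional_extensionality; intros [y|x0]; simpl; auto. rewrite bindT_ret_l; auto.
Qed.

Lemma bindT_chain A B (k : A -> Tm B) (c : nat -> Tm A) : chain c -> chain (fun n => bindT k (c n)).
Proof. intros Hc n. apply bindT_mono. intro; apply Hle_refl. apply Hc. Qed.

Let F := fun x' => iota' (f x').
Let F' := fun x' => iota' (fnat x').

Lemma F'_MI x s b : MI F x s -> iota' (g s) = inl b -> MI F' x b.
Proof.
  induction 1 as [x s H|x x' s H HM IH]; intro Hb.
  - apply mi_done. unfold F'. unfold fnat. rewrite iota'_bindT. fold (F x). rewrite H. simpl.
    rewrite iota'_bindT, Hb. reflexivity.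
  - apply mi_step with x'; auto. unfold F', fnat. rewrite iota'_bindT. fold (F x). rewrite H. reflexivity.
Qed.

Lemma natural_le x : Hle (bindT g (iterT f x)) (iterT fnat x).
Proof.
  rewrite iterT_eq, iterH_eq. unfold LH. rewrite tauM_sup by apply kleeneH_chain.
  rewrite bindT_sup_p by (apply tauM_chain, kleeneH_chain).
  apply sup_least. apply bindT_chain, tauM_chain, kleeneH_chain.
  intro n. revert x. induction n; intro x.
  - simpl. rewrite tauM_bot, bindT_bot. apply botH_le.
  - simpl. unfold iterH_step. rewrite tauM_bind.
    rewrite bindT_eq, tauM_bind, bindH_assoc, tauM_comp.
    rewrite (iterT_fix fnat x), Phi_fnat, bindT_eq.
    apply bindH_mono.
    + apply tauM_mono_M. intros [y|x'] b Hb; unfold compM, NT in *; simpl in *.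
      * exact Hb.
      * rewrite iota'_iterT. fold F'.
        destruct (maybe_iter (fun x'0 => iota' (f x'0)) x') as [s|[]] eqn:E; [|discriminate].
        apply maybe_iter_MI in E. apply maybe_iter_MI. eapply F'_MI; eauto.
    + intros [y|x']; simpl.
      * rewrite tauM_eta. change (etaH Y y) with (etaT y). rewrite <- bindT_eq. rewrite bindT_ret_l. apply Hle_refl.
      * rewrite <- bindT_eq. apply IHn.
Qed.

Lemma naturality x : bindT g (iterT f x) = iterT fnat x.
Proof. apply Hle_antisym. apply natural_le. apply natural_ge. Qed.
End Nat.
Open Scope R_scope.
Set Implicit Arguments.

Section Codiag.
Context {X Y : Type} (f : X -> Tm ((Y + X) + X)).

Definition f1 : X -> Tm (Y + X) := fun x' =>
  bindT (fun z => etaT (copair (fun z0 => z0) (@inr Y X) z)) (f x').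

Definition F2 (k j : X -> Tm Y) : X -> Tm Y := fun x => bindT (copair (copair (@etaT Y) k) j) (f x).

Lemma c1 k x : PhiT f1 k x = F2 k k x.
Proof.
  unfold PhiT, f1, F2. rewrite bindT_assoc. f_equal. apply functional_extensionality; intros [[y|x']|x'];
  rewrite bindT_ret_l; reflexivity.
Qed.

Lemma c2 k x : PhiT (iterT f) k x = iterT (fnat f (copair (@etaT Y) k)) x.
Proof. unfold PhiT. apply naturality. Qed.

Lemma c3 k j x : PhiT (fnat f (copair (@etaT Y) k)) j x = F2 k j x.
Proof. rewrite Phi_fnat. reflexivity. Qed.

Lemma codiag x : iterT f1 x = iterT (iterT f) x.
Proof.
  apply Hle_antisym.
  - revert x. apply iterT_least. intro x. rewrite c1.
    assert (Hb : forall x, iterT (iterT f) x = F2 (iterT (iterT f)) (iterT (iterT f)) x).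
    { intro x0. rewrite iterT_fix at 1. rewrite c2. rewrite iterT_fix. rewrite c3. f_equal.
      apply functional_extensionality; intro x1. rewrite <- c2. symmetry. apply iterT_fix. }
    rewrite <- Hb. apply Hle_refl.
  - revert x. apply iterT_least. intro x. rewrite c2. revert x. apply iterT_least. intro x.
    rewrite c3, <- c1, <- iterT_fix. apply Hle_refl.
Qed.
End Codiag.

Section MapH.
Context {A B : Type} (k : A -> B).

Lemma mapH_bind X Y (K : X -> H A Y) (p : H A X) :
  mapH k (bindH K p) = bindH (fun v => mapH k (K v)) (mapH k p).
Proof.
  apply H_ext.
  - rewrite mapH_hg, !bindH_hg, mapH_hend. destruct (hend p) as [[d x]|]; [|rewrite mapH_hg; auto].
    rewrite !mapH_hg. apply functional_extensionality; intro t. unfold gconcat. destruct (Rlt_dec t d); auto.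
  - rewrite mapH_hend, !bindH_hend, mapH_hend. destruct (hend p) as [[d x]|]; auto. rewrite mapH_hend; auto.
Qed.

Lemma mapH_eta X (x : X) : mapH k (etaH A x) = etaH B x.
Proof. apply H_ext. rewrite mapH_hg; reflexivity. rewrite mapH_hend; reflexivity. Qed.

Lemma mapH_bot X : mapH k (botH : H A X) = botH.
Proof. apply H_ext. rewrite mapH_hg; reflexivity. rewrite mapH_hend; reflexivity. Qed.

Lemma mapH_mono X (p q : H A X) : Hle p q -> Hle (mapH k p) (mapH k q).
Proof.
  rewrite !Hle_iff. intros [H|[H1 H2]]; [subst; auto|]. right. rewrite mapH_hend, !mapH_hg. split; auto.
  intros t Ht. destruct (hg p t) eqn:E; simpl in *; [|congruence]. rewrite H2; [rewrite E; auto|congruence].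
Qed.

Lemma mapH_sup X (c : nat -> H A X) : chain c -> mapH k (supH c) = supH (fun n => mapH k (c n)).
Proof.
  intro Hc. symmetry. apply sup_char. intro n; apply mapH_mono, Hc.
  - intros t v. cbv beta. rewrite mapH_hg. split.
    + intro H. destruct (hg (supH c) t) as [a|] eqn:E; simpl in H; [|discriminate].
      apply sup_hg in E; auto. destruct E as [n Hn]. exists n. rewrite mapH_hg, Hn; auto.
    + intros [n Hn]. rewrite mapH_hg in Hn. destruct (hg (c n) t) as [a|] eqn:E; simpl in Hn; [|discriminate].
      assert (hg (supH c) t = Some a) by (apply sup_hg; eauto). rewrite H; auto.
  - intros z. cbv beta. rewrite mapH_hend, sup_hend; auto.
    split; intros [n Hn]; exists n; rewrite ?mapH_hend in *; auto.
Qed.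
End MapH.

Section Unif.
Context {X Y Z : Type} (f : X -> Tm (Y + X)) (g : Z -> Tm (Y + Z)) (h : Z -> X).
Let kk : Y + Z -> Y + X := copair (@inl Y X) (fun z' => inr (h z')).
Hypothesis Hfg : forall z, f (h z) = bindT (fun v => etaT (kk v)) (g z).

Lemma fmap_eq (p : Tm (Y + Z)) : bindT (fun v => etaT (kk v)) p = bindH (fun v => etaH (Y + X) (kk v)) (mapH kk p).
Proof.
  rewrite bindT_eq. f_equal. rewrite <- (tauM_inl (mapH kk p)) at 1. rewrite tauM_map. reflexivity.
Qed.

Lemma kleene_unif n z : kleeneH f n (h z) = mapH kk (kleeneH g n z).
Proof.
  revert z. induction n; intro z.
  - simpl. symmetry. apply mapH_bot.
  - simpl. unfold iterH_step. rewrite Hfg, fmap_eq, bindH_assoc, mapH_bind. f_equal.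
    apply functional_extensionality; intros [y|z'].
    + change (kk (inl y)) with (@inl Y X y). rewrite bindH_eta_l. cbn [copair]. rewrite mapH_eta. reflexivity.
    + change (kk (inr z')) with (@inr Y X (h z')). rewrite bindH_eta_l. cbn [copair]. apply IHn.
Qed.

Let Ff := fun x' => iota' (f x').
Let Fg := fun z' => iota' (g z').

Lemma Ff_char z : Ff (h z) = match Fg z with inl v => inl (kk v) | inr u => inr u end.
Proof. unfold Ff, Fg. rewrite Hfg, iota'_bindT. destruct (iota' (g z)); reflexivity. Qed.

Lemma MI_unif1 z s : MI Fg z s -> MI Ff (h z) s.
Proof.
  induction 1 as [z s H|z z' s H HM IH].
  - apply mi_done. rewrite Ff_char, H. reflexivity.
  - apply mi_step with (h z'); auto. rewrite Ff_char, H. reflexivity.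
Qed.

Lemma MI_unif2 x s : MI Ff x s -> forall z, x = h z -> MI Fg z s.
Proof.
  induction 1 as [x s H|x x' s H HM IH]; intros z Hz; subst x.
  - rewrite Ff_char in H. destruct (Fg z) as [[y|z']|u] eqn:E; simpl in H; try discriminate.
    injection H; intro; subst. apply mi_done; auto.
  - rewrite Ff_char in H. destruct (Fg z) as [[y|z']|u] eqn:E; simpl in H; try discriminate.
    injection H; intro; subst. apply mi_step with z'; auto.
Qed.

Lemma uniformity z : iterT f (h z) = iterT g z.
Proof.
  rewrite !iterT_eq, !iterH_eq. unfold LH.
  replace (fun n => kleeneH f n (h z)) with (fun n => mapH kk (kleeneH g n z))
    by (apply functional_extensionality; intro n; symmetry; apply kleene_unif).
  rewrite <- mapH_sup by apply kleeneH_chain. rewrite tauM_map. f_equal.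
  apply functional_extensionality; intros [y|z']; simpl; auto. unfold Mf. simpl.
  fold Ff. fold Fg.
  destruct (maybe_iter Fg z') as [s|[]] eqn:E.
  - apply maybe_iter_MI in E. apply maybe_iter_MI. apply MI_unif1; auto.
  - destruct (maybe_iter Ff (h z')) as [s|[]] eqn:E2; auto.
    apply maybe_iter_MI in E2. pose proof (MI_unif2 E2 eq_refl) as E3.
    apply maybe_iter_MI in E3. congruence.
Qed.
End Unif.
Open Scope R_scope.
Set Implicit Arguments.

Definition clg {X} (d : R) (g : R -> option X) (x : X) : R -> option X :=
  fun t => if Rlt_dec t d then g t else if Req_EM_T t d then Some x else None.

Definition alpha X (p : Tm X) : HH X :=
  match p with
  | inl (m, x) => mk_conv (mk_traj (clg (trj_len m) (tev (proj1_sig m)) x))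
  | inr e => inr e end.

Definition beta X (q : HH X) : Tm X :=
  match q with
  | inl c =>
      match tdur (proj1_sig c) with
      | DClosed d =>
          match tev (proj1_sig c) d with
          | Some x => inl (trj_of (fun t => if Rlt_dec t d then tev (proj1_sig c) t else None), x)
          | None => inr (proj1_sig c) end
      | _ => inr (proj1_sig c) end
  | inr e => inr e end.

Lemma mk_traj_dur A (G : R -> option A) D : dur_ok D -> (forall t, G t <> None <-> in_dom D t) ->
  tdur (mk_traj G) = D /\ tev (mk_traj G) = G.
Proof.
  intros Hd HG. assert (Hs : seg G).
  { split. intros t Ht. apply HG in Ht. destruct D; simpl in *; lra.
    intros s t Hs Hst Ht. apply HG in Ht. apply HG. destruct D; simpl in *; lra. }
  split; [|apply mk_traj_ev; auto].
  destruct (mk_traj G) as [D' f o h] eqn:E. simpl.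
  assert (f = G) by (pose proof (mk_traj_ev Hs) as H; rewrite E in H; exact H). subst f.
  apply dur_unique; auto. intro t. rewrite <- h, HG. tauto.
Qed.

Lemma mk_conv_closed X (e : traj X) d : tdur e = DClosed d -> exists c, mk_conv e = inl c /\ proj1_sig c = e.
Proof.
  intro H. unfold mk_conv, ctraj_fallback. destruct (excluded_middle_informative _) as [Hx|Hx].
  - eexists; split; [reflexivity|reflexivity].
  - elim Hx; eauto.
Qed.

Lemma mk_conv_open X (e : traj X) : (forall d, tdur e <> DClosed d) -> mk_conv e = inr e.
Proof.
  intro H. unfold mk_conv, ctraj_fallback. destruct (excluded_middle_informative _) as [[d Hx]|Hx]; auto.
  elim (H d Hx).
Qed.

Lemma clg_dom X (g : R -> option X) d x : oseg g d ->
  forall t, clg d g x t <> None <-> in_dom (DClosed d) t.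
Proof.
  intros [Hd W] t. unfold clg. simpl. destruct (Rlt_dec t d).
  - rewrite W. lra.
  - destruct (Req_EM_T t d). split; [lra|congruence]. split; [congruence|lra].
Qed.

Lemma alpha_inl X (m : Trj X) x : exists c, alpha (inl (m, x)) = inl c /\
  tdur (proj1_sig c) = DClosed (trj_len m) /\ tev (proj1_sig c) = clg (trj_len m) (tev (proj1_sig m)) x.
Proof.
  simpl. pose proof (trj_oseg m) as W.
  assert (HH1 : dur_ok (DClosed (trj_len m))) by (simpl; apply (proj1 W)).
  destruct (@mk_traj_dur _ (clg (trj_len m) (tev (proj1_sig m)) x) (DClosed (trj_len m)) HH1 (clg_dom x W))
    as [H1 H2].
  destruct (mk_conv_closed _ H1) as [c [Hc Hc2]]. exists c. rewrite Hc, Hc2. auto.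
Qed.

Lemma sig_ext X (c1 c2 : ctraj X) : proj1_sig c1 = proj1_sig c2 -> c1 = c2.
Proof. destruct c1, c2; simpl; intro; subst; f_equal; apply proof_irrelevance. Qed.

Lemma beta_alpha X (p : Tm X) : beta (alpha p) = p.
Proof.
  destruct p as [[m x]|e]; [|reflexivity].
  destruct (alpha_inl m x) as [c [Hc [Hd Hg]]]. rewrite Hc. simpl. rewrite Hd, Hg.
  unfold clg at 1. destruct (Rlt_dec (trj_len m) (trj_len m)); [lra|].
  destruct (Req_EM_T (trj_len m) (trj_len m)); [|congruence].
  f_equal. f_equal. pose proof (trj_oseg m) as W.
  assert (E : (fun t => if Rlt_dec t (trj_len m) then clg (trj_len m) (tev (proj1_sig m)) x t else None)
              = tev (proj1_sig m)).
  { apply functional_extensionality; intro t. unfold clg. destruct (Rlt_dec t (trj_len m)); auto.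
    symmetry. apply (oseg_out W). lra. }
  rewrite E. apply trj_ext. rewrite (proj1 (trj_of_ev W)). auto.
Qed.

Lemma alpha_beta X (q : HH X) : alpha (beta q) = q.
Proof.
  destruct q as [c|e]; [|reflexivity].
  destruct (proj2_sig c) as [d Hd]. unfold beta. rewrite Hd.
  set (e := proj1_sig c) in *.
  pose proof (seg_tev e) as Hs. pose proof (tev_dom e) as Hdom. rewrite Hd in Hdom. simpl in Hdom.
  pose proof (tdur_ok e) as Hok. rewrite Hd in Hok. simpl in Hok.
  destruct (tev e d) as [x|] eqn:Ex.
  2:{ exfalso. apply (proj2 (Hdom d)); auto. lra. }
  set (g := fun t => if Rlt_dec t d then tev e t else None).
  assert (W : oseg g d).
  { split; auto. intro t. unfold g. destruct (Rlt_dec t d). rewrite Hdom. lra. split; [congruence|lra]. }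
  destruct (alpha_inl (trj_of g) x) as [c2 [Hc [Hd2 Hg]]]. rewrite Hc. f_equal. apply sig_ext. simpl.
  apply traj_ext. rewrite Hg. destruct (trj_of_ev W) as [E1 E2]. rewrite E1, E2.
  apply functional_extensionality; intro t. unfold clg, g. destruct (Rlt_dec t d); auto.
  destruct (Req_EM_T t d). subst t; auto. destruct (tev e t) eqn:E; auto. exfalso.
  assert (tev e t <> None) by congruence. apply Hdom in H. lra.
Qed.

Lemma alpha_eta X (x : X) : alpha (etaT x) = hret x.
Proof.
  unfold etaT, etaH, hret. simpl. f_equal. f_equal. apply functional_extensionality; intro t.
  unfold clg. cbn. destruct (Rlt_dec t 0); destruct (Req_EM_T t 0); auto; lra.
Qed.
Open Scope R_scope.
Set Implicit Arguments.

Definition headH {X Y} (f' : X -> HH Y) (e : traj X) : R -> option Y :=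
  fun t => if decP (0 <= t /\ forall s, 0 <= s <= t -> exists x, tev e s = Some x /\ f' x <> inr (traj_empty Y))
           then match tev e t with Some x => tev (HH_traj (f' x)) 0 | None => None end else None.

Definition gH {X Y} (f' : X -> HH Y) (e : traj X) (d : R) (xd : X) : R -> option Y :=
  fun t => if Rlt_dec t d
           then match tev e t with Some x => tev (HH_traj (f' x)) 0 | None => None end
           else tev (HH_traj (f' xd)) (t - d).

Lemma hbind_inr X Y (f' : X -> HH Y) e : hbind f' (inr e) = inr (mk_traj (headH f' e)).
Proof. reflexivity. Qed.

Lemma hbind_inl X Y (f' : X -> HH Y) (c : ctraj X) d : tdur (proj1_sig c) = DClosed d ->
  hbind f' (inl c) =
  if decP (forall t, (0 <= t /\ forall s, 0 <= s <= t -> exists x, tev (proj1_sig c) s = Some x /\ f' x <> inr (traj_empty Y))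
                     <-> in_dom (DClosed d) t)
  then match tev (proj1_sig c) d with
       | Some xd => match f' xd with
                    | inl _ => mk_conv (mk_traj (gH f' (proj1_sig c) d xd))
                    | inr _ => inr (mk_traj (gH f' (proj1_sig c) d xd)) end
       | None => inr (mk_traj (headH f' (proj1_sig c))) end
  else inr (mk_traj (headH f' (proj1_sig c))).
Proof. intro Hd. unfold hbind. simpl. rewrite Hd. reflexivity. Qed.

Definition AG {Y} (q : Tm Y) : R -> option Y := tev (HH_traj (alpha q)).

Lemma alpha_char_inl Y (q : Tm Y) d y : hend q = Some (d, y) -> alpha q = mk_conv (mk_traj (clg d (hg q) y)).
Proof. destruct q as [[m y']|e]; simpl; intro H; [|discriminate]. injection H; intros; subst. reflexivity. Qed.

Lemma alpha_char_inr Y (q : Tm Y) : hend q = None -> alpha q = inr (H_traj q).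
Proof. destruct q as [[m y']|e]; simpl; intro H; [discriminate|]. reflexivity. Qed.

Lemma AG_char Y (q : Tm Y) : AG q = match hend q with Some (d, y) => clg d (hg q) y | None => hg q end.
Proof.
  unfold AG. destruct q as [[m y]|e].
  - destruct (alpha_inl m y) as [c [Hc [Hd Hg]]]. rewrite Hc. simpl. rewrite Hg. reflexivity.
  - reflexivity.
Qed.

Lemma AG0 Y (q : Tm Y) : AG q 0 = match iota' q with inl a => Some a | inr _ => None end.
Proof.
  rewrite AG_char, iota'_char. destruct (hend q) as [[d y]|] eqn:E.
  - pose proof (hend_len E) as W. unfold clg. destruct (Rlt_dec 0 d).
    + destruct (hg q 0) eqn:E0; auto. exfalso. apply (oseg_in W (t:=0)); auto. lra.
    + assert (d = 0) by (destruct W; lra). subst d. destruct (Req_EM_T 0 0); [|congruence].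
      rewrite (oseg_out W (t:=0)) by lra. auto.
  - destruct (hg q 0); auto.
Qed.

Lemma alpha_bot_iff Y (q : Tm Y) : alpha q = inr (traj_empty Y) <-> iota' q = inr tt.
Proof.
  rewrite iota'_char. split.
  - destruct q as [[m y]|e].
    + destruct (alpha_inl m y) as [c [Hc _]]. rewrite Hc. discriminate.
    + simpl. intro H. injection H; intro; subst. reflexivity.
  - destruct q as [[m y]|e]; simpl.
    + destruct (hg (inl (m, y)) 0); intro H; discriminate.
    + unfold hg; simpl. intro H. f_equal. apply traj_ext. apply functional_extensionality; intro t. simpl.
      destruct (tev e 0) eqn:E0; [discriminate|].
      destruct (tev e t) eqn:Et; auto. exfalso.
      assert (0 <= t) by (apply (proj1 (seg_tev e)); congruence).
      apply (proj2 (seg_tev e) 0 t); try lra; congruence.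
Qed.
Open Scope R_scope.
Set Implicit Arguments.

Section Iso.
Context {X Y : Type} (f : X -> Tm Y).
Let N := NT f.
Let f' := fun x => alpha (f x).

Lemma f'_nonbot x : f' x <> inr (traj_empty Y) <-> exists a, N x = inl a.
Proof.
  unfold f', N, NT. rewrite alpha_bot_iff. destruct (iota' (f x)) as [a|[]].
  - split; [intro; eauto | intros _; discriminate].
  - split; [intro H; elim H; reflexivity | intros [b Hb]; discriminate].
Qed.

Lemma f'_0 x : tev (HH_traj (f' x)) 0 = match N x with inl a => Some a | inr _ => None end.
Proof. apply AG0. Qed.

Lemma headH_char (e : traj X) t a : headH f' e t = Some a <->
  0 <= t /\ okM N (tev e) t /\ exists v, tev e t = Some v /\ N v = inl a.
Proof.
  unfold headH. fold f'. destruct (decP _) eqn:E.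
  - unfold decP in E. destruct (excluded_middle_informative _) as [[H0 Hx]|Hx]; [|discriminate].
    split.
    + intro H. split; auto. split.
      * intros s Hs. destruct (Hx s Hs) as [v [Hv Hn]]. apply f'_nonbot in Hn. destruct Hn as [b Hb].
        exists v, b; auto.
      * destruct (tev e t) as [v|]; [|discriminate]. exists v; split; auto. rewrite f'_0 in H.
        destruct (N v); congruence.
    + intros [_ [_ [v [Hv Ha]]]]. rewrite Hv, f'_0, Ha. auto.
  - unfold decP in E. destruct (excluded_middle_informative _) as [Hx|Hx]; [discriminate|].
    split; [discriminate|]. intros [H0 [Hok _]]. elim Hx. split; auto. intros s Hs.
    destruct (Hok s Hs) as [v [b [Hv Hb]]]. exists v; split; auto. apply f'_nonbot; eauto.
Qed.

Lemma mk_traj_hg S Z (q : H S Z) G : G = hg q -> tev (mk_traj G) = hg q.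
Proof. intro H; subst. apply mk_traj_ev. apply hg_seg. Qed.

Lemma iso_inr e0 : alpha (bindT f (inr e0)) = hbind f' (alpha (inr e0)).
Proof.
  change (alpha (bindT f (inr e0))) with (@inr (ctraj Y) (traj Y) (lprefix (tmap N e0))).
  simpl alpha. rewrite hbind_inr. f_equal. apply traj_ext.
  change (tev (lprefix (tmap N e0))) with (hg (tauM N (@inr (Trj X * X) (traj X) e0))).
  symmetry. apply mk_traj_hg. apply functional_extensionality; intro t. apply opt_eq_char; intro a.
  rewrite headH_char, tauM_hg. unfold hg at 1 2. simpl. split.
  - intros [_ H]; auto.
  - intros [H1 [v [Hv Ha]]]. split; [|eauto]. apply (proj1 (seg_tev e0)). congruence.
Qed.

Section InlCase.
Variables (m : Trj X) (x : X).
Let d := trj_len m.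
Let p : Tm X := inl (m, x).
Let G := clg d (tev (proj1_sig m)) x.

Lemma Wm : oseg (tev (proj1_sig m)) d.
Proof. apply trj_oseg. Qed.

Lemma G_lt t : t < d -> G t = hg p t.
Proof. intro H. unfold G, clg. destruct (Rlt_dec t d); [reflexivity|lra]. Qed.

Lemma G_d : G d = Some x.
Proof. unfold G, clg. destruct (Rlt_dec d d); [lra|]. destruct (Req_EM_T d d); congruence. Qed.

Lemma G_gt t : d < t -> G t = None.
Proof. intro H. unfold G, clg. destruct (Rlt_dec t d); [lra|]. destruct (Req_EM_T t d); [lra|auto]. Qed.

Lemma okM_G_lt t : t < d -> (okM N G t <-> okM N (hg p) t).
Proof.
  intro Ht. split; intros H s Hs; destruct (H s Hs) as [v [a [Hv Ha]]]; exists v, a; split; auto.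
  rewrite <- G_lt; auto; lra. rewrite G_lt; auto; lra.
Qed.

Lemma Cfull_iff :
  (forall t, (0 <= t /\ forall s, 0 <= s <= t -> exists x', G s = Some x' /\ f' x' <> inr (traj_empty Y))
             <-> in_dom (DClosed d) t) <-> okM N G d.
Proof.
  pose proof Wm as [Hd _]. split.
  - intro H. destruct (proj2 (H d)) as [_ H2]. simpl; lra.
    intros s Hs. destruct (H2 s Hs) as [v [Hv Hn]]. apply f'_nonbot in Hn. destruct Hn as [b Hb]. exists v, b; auto.
  - intros H t. simpl. split.
    + intros [H0 H1]. split; auto. destruct (Rle_dec t d); auto. exfalso.
      destruct (H1 t) as [v [Hv _]]; [lra|]. rewrite G_gt in Hv; [discriminate|lra].
    + intros Ht. split; [lra|]. intros s Hs. destruct (H s ltac:(lra)) as [v [b [Hv Hb]]].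
      exists v; split; auto. apply f'_nonbot; eauto.
Qed.

Lemma iso_inl : alpha (bindT f p) = hbind f' (alpha p).
Proof.
  destruct (alpha_inl m x) as [c [Hc [Hd Hg]]]. fold d in Hd, Hg. fold G in Hg.
  unfold p at 2. rewrite Hc, (hbind_inl _ _ Hd). rewrite Hg, G_d.
  pose proof Wm as W. pose proof W as [Hd0 _].
  assert (Hp : hend p = Some (d, x)) by reflexivity.
  rewrite bindT_eq. change (NT f) with N.
  destruct (classic (okM N G d)) as [Hf|Hnf].
  - rewrite decP_true by (apply Cfull_iff; auto).
    assert (Hfull : forall t, 0 <= t < d -> okM N (hg p) t).
    { intros t Ht. apply okM_G_lt. lra. apply (okM_down Hf). lra. }
    assert (Et : hend (tauM N p) = Some (d, x)) by (apply tauM_hend; split; auto).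
    assert (Htau : forall t, t < d -> hg (tauM N p) t = match hg p t with Some v => match N v with inl a => Some a | inr _ => None end | None => None end).
    { intros t Ht. apply opt_eq_char; intro a. rewrite tauM_hg. split.
      - intros [_ [v [Hv Ha]]]. rewrite Hv, Ha. auto.
      - intro H. destruct (hg p t) as [v|] eqn:Ev; [|discriminate].
        destruct (N v) as [b|] eqn:Eb; [|discriminate]. injection H; intro; subst.
        split; [|eauto]. apply Hfull. split; [apply (hg_pos p); congruence|lra]. }
    assert (HgH : forall t, t < d -> gH f' (proj1_sig c) d x t = hg (tauM N p) t).
    { intros t Ht. unfold gH. destruct (Rlt_dec t d); [|lra]. rewrite Hg, G_lt, Htau; auto.
      destruct (hg p t) as [v|]; auto. apply f'_0. }
    destruct (f x) as [[m' y]|e'] eqn:Efx.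
    + destruct (alpha_inl m' y) as [c' [Hc' _]]. unfold f' at 1. rewrite Efx, Hc'.
      rewrite (@alpha_char_inl _ _ (d + trj_len m') y).
      2:{ rewrite bindH_hend, Et, Efx. reflexivity. }
      f_equal. f_equal. apply functional_extensionality; intro t.
      rewrite bindH_hg, Et, Efx. unfold clg at 1, gconcat.
      destruct (Rlt_dec t d) as [Hlt|Hlt].
      * destruct (Rlt_dec t (d + trj_len m')) as [Hlt2|Hlt2].
        -- symmetry; apply HgH; auto.
        -- exfalso. pose proof (proj1 (trj_oseg m')). lra.
      * unfold gH. destruct (Rlt_dec t d); [lra|]. unfold f'. rewrite Efx.
        fold (AG (@inl (Trj Y * Y) (traj Y) (m', y))). rewrite AG_char. simpl. unfold clg, hg. simpl.
        destruct (Rlt_dec t (d + trj_len m')), (Rlt_dec (t - d) (trj_len m')); try lra; auto.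
        destruct (Req_EM_T t (d + trj_len m')), (Req_EM_T (t - d) (trj_len m')); auto; lra.
    + unfold f' at 1. rewrite Efx. simpl alpha.
      rewrite alpha_char_inr. 2:{ rewrite bindH_hend, Et, Efx. reflexivity. }
      f_equal. apply traj_ext. symmetry. apply mk_traj_hg.
      apply functional_extensionality; intro t. rewrite bindH_hg, Et, Efx. unfold gconcat.
      destruct (Rlt_dec t d) as [Hlt|Hlt]. apply HgH; auto.
      unfold gH. destruct (Rlt_dec t d); [lra|]. unfold f'. rewrite Efx. reflexivity.
  - rewrite decP_false by (rewrite Cfull_iff; auto).
    assert (Hnone : hend (bindH f (tauM N p)) = None).
    { rewrite bindH_hend. destruct (hend (tauM N p)) as [[d1 x1]|] eqn:Et; auto.
      apply tauM_hend in Et. destruct Et as [Et Hfull]. rewrite Hp in Et. injection Et; intros; subst d1 x1.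
      simpl in Hfull. destruct (N x) as [b|[]] eqn:Nx.
      - exfalso. apply Hnf. intros s Hs. destruct (Rlt_dec s d).
        + destruct (Hfull s ltac:(lra) s ltac:(lra)) as [v [a [Hv Ha]]]. exists v, a. rewrite G_lt; auto.
        + assert (s = d) by lra. subst s. rewrite G_d. exists x, b; auto.
      - unfold N, NT in Nx. rewrite iota'_char in Nx. destruct (hend (f x)) as [[d2 y2]|]; auto.
        destruct (hg (f x) 0); discriminate. }
    rewrite alpha_char_inr by exact Hnone. f_equal. apply traj_ext. symmetry. apply mk_traj_hg.
    apply functional_extensionality; intro t. apply opt_eq_char; intro a.
    rewrite headH_char, Hg. rewrite bindH_hg_some.
    assert (Hcore : (0 <= t /\ okM N G t /\ exists v, G t = Some v /\ N v = inl a) <->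
                    (t < d /\ okM N (hg p) t /\ exists v, hg p t = Some v /\ N v = inl a)).
    { split.
      - intros [H0 [Hok [v [Hv Ha]]]]. assert (Ht : t < d).
        { destruct (Rlt_dec t d); auto. exfalso. apply Hnf. apply (okM_down Hok). lra. }
        split; auto. split. apply okM_G_lt; auto. exists v; split; auto. rewrite <- G_lt; auto.
      - intros [Ht [Hok [v [Hv Ha]]]]. split. apply (hg_pos p); congruence. split.
        apply okM_G_lt; auto. exists v; split; auto. rewrite G_lt; auto. }
    rewrite Hcore. destruct (hend (tauM N p)) as [[d1 x1]|] eqn:Et.
    + pose proof Et as Et'. apply tauM_hend in Et'. destruct Et' as [Et' _]. rewrite Hp in Et'.
      injection Et'; intros; subst d1 x1.
      assert (Hfx : forall u, hg (f x) u = None).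
      { rewrite bindH_hend, Et in Hnone. unfold shift_end in Hnone.
        destruct (hend (f x)) as [[d2 y2]|] eqn:Ef; [discriminate|].
        assert (N x = inr tt).
        { destruct (N x) as [b|[]] eqn:Nx; auto. exfalso. apply Hnf.
          apply tauM_hend in Et. destruct Et as [_ Hfull]. simpl in Hfull.
          intros s Hs. destruct (Rlt_dec s d).
          + destruct (Hfull s ltac:(lra) s ltac:(lra)) as [v [a' [Hv Ha]]]. exists v, a'. rewrite G_lt; auto.
          + assert (s = d) by lra. subst s. rewrite G_d. exists x, b; auto. }
        unfold N, NT in H. rewrite iota'_char, Ef in H. intro u.
        destruct (hg (f x) 0) eqn:E0; [discriminate|].
        destruct (hg (f x) u) eqn:Eu; auto. exfalso.
        apply (hg_seg_def (f x) (s:=0) (t:=u)); try lra; try congruence. apply (hg_pos (f x)); congruence. }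
      split.
      * intros [Ht [Hok Hv]]. left. split; auto. apply tauM_hg. split; auto.
      * intros [[Ht Hv]|[Ht Hv]]. apply tauM_hg in Hv. tauto. rewrite Hfx in Hv. discriminate.
    + split.
      * intros [Ht [Hok Hv]]. apply tauM_hg. split; auto.
      * intro Hv. apply tauM_hg in Hv. destruct Hv as [Hok [v [Hv Ha]]]. split; [|split; eauto].
        assert (hg p t <> None) by congruence. apply W in H. lra.
Qed.
End InlCase.

Lemma iso_bind (p : Tm X) : alpha (bindT f p) = hbind f' (alpha p).
Proof. destruct p as [[m x]|e]. apply iso_inl. apply iso_inr. Qed.
End Iso.
Theorem theorem3 :
  is_elgot_monad Tm etaT bindT iterT /\
  exists (alpha : forall X : Type, Tm X -> HH X) (beta : forall X : Type, HH X -> Tm X),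
    (forall X (p : Tm X), beta X (alpha X p) = p) /\
    (forall X (q : HH X), alpha X (beta X q) = q) /\
    (forall X (x : X), alpha X (etaT x) = hret x) /\
    (forall X Y (f : X -> Tm Y) (p : Tm X),
        alpha Y (bindT f p) = hbind (fun x => alpha Y (f x)) (alpha X p)).
Proof.
  split.
  - unfold is_elgot_monad. cbv zeta.
    split; [intros; apply bindT_ret_r|].
    split; [intros; apply bindT_ret_l|].
    split; [intros; apply bindT_assoc|].
    split; [intros; apply iterT_fix|].
    split; [intros X Y Z f g x; exact (naturality f g x)|].
    split; [intros X Y f x; exact (codiag f x)|].
    intros X Y Z f g h Hfg z. exact (uniformity f g h Hfg z).
  - exists alpha, beta. split; [exact beta_alpha|]. split; [exact alpha_beta|].
    split; [exact alpha_eta|]. intros X Y f p. exact (iso_bind f p).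
Qed.
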